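(* Let $S$ be a statement in Yul source syntax, $G$ a global environment, $L$ a local state and $\mathcal{N}$ a function namespace. Then for all $G', L', \mathcal{N}'$ the following are equivalent: (1) $\langle S \mid G; L; \mathcal{N}\rangle \Downarrow \langle \mathsf{regular} \mid G'; L'; \mathcal{N}'\rangle$ (big-step evaluation); (2) $\langle S \mid G; L; \mathcal{N}\rangle \to^* \langle \mathsf{regular} \mid G'; L'; \mathcal{N}'\rangle$ (small-step reduction sequence).
   Context: Yul syntax. Fix (dialect-specific) values $u,v,c$, variables $x,y,z,f$, and opcodes $op$. $\vec x$ denotes a comma-separated list, $S^*$ a juxtaposed sequence. Expressions: $M ::= f(M_1,\dots,M_n) \mid op(M_1,\dots,M_n) \mid x \mid v$. Statements: $S ::= \{S^*\} \mid \mathsf{function}\ f(\vec y) \to \vec z\ \{S^*\} \mid \mathsf{let}\ \vec x := M \mid \vec x := M \mid M \mid \mathsf{if}\ M\ \{S^*\} \mid \mathsf{switch}\ M\ (\mathsf{case}\ c_i\ \{S^*\})^*\ \mathsf{default}\ \{S^*\} \mid \mathsf{for}\ \{S^*\}\ M\ \{S^*\}\ \{S^*\} \mid \mathsf{break} \mid \mathsf{continue} \mid \mathsf{leave}$ (the for-loop components are: initialisation block, condition, post-iteration block $S_p$, body $S_b$). A statement generated by this grammar is in source syntax. The dialect supplies: predicates identifying which values count as $\mathsf{true}$ and $\mathsf{false}$; a set of external irregular modes $\mathcal{M}$; and an opcode relation $\langle op(v_1,\dots,v_n) \mid G\rangle \Downarrow_{\mathsf{opc}} \langle S' \mid G'\rangle$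 with $G,G'$ global environments (arbitrary dialect state) and $S'$ either a tuple of values or an external mode. Runtime syntax adds to statements: modes $\mathbb{M} ::= \mathsf{regular} \mid \mathsf{break} \mid \mathsf{continue} \mid \mathsf{leave} \mid \mathcal{M}$; scoped blocks $\{S_1,\dots,S_n\}^{\mathcal{N}}_L$; loop catchers $\mathsf{Brk}[S]$ and $\mathsf{Cnt}[S]$; call frames $\mathsf{Frame}^{\vec z}_L[S]$; and to expressions tuples $\langle v_1,\dots,v_m\rangle$ (convention: $\langle v\rangle = v$, $\langle\rangle = \mathsf{regular}$). A configuration $\langle S \mid G; L; \mathcal{N}\rangle$ has a term $S$, global environment $G$, local state $L$ (finite map variables to values) and namespace $\mathcal{N}$ (finite map from function names to triples $(\vec y,\vec z,S_b)$). $L_1\upharpoonright L$ is $L_1$ restricted to $\mathrm{dom}(L)$; $L[\vec x\mapsto\vec v]$ is update; $\uplus$ is disjoint union; $\mathrm{funs}(\{S_1\dots S_n\})$ maps $f\mapsto(\vec y,\vec z,B)$ for each $S_i = \mathsf{function}\ f(\vec y)\to\vec z\ B$. For $\mathcal{N}(f) = ((y_1..y_n),(z_1..z_m),S_b)$ and arguments $v_1..v_n$, $L_f = \{y_i\mapsto v_i\}\uplus\{z_j\mapsto 0\}$. Big-step relations $\Downarrow$ (statements), $\Downarrow_{\mathsf{seq}}$ (sequences), $\Downarrow_{\mathsf{exp}}$ (expressions, results $v$, $\langle\vec v\rangle$ or $\mathsf{regular}$) are inductively defined by: (Block) if $\mathcal{N}_1=\mathrm{funs}(\{S_1..S_n\})$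 and $\langle S_1,..,S_n\mid G;L;\mathcal{N}\uplus\mathcal{N}_1\rangle\Downarrow_{\mathsf{seq}}\langle\mathbb{M}\mid G_1;L_1;\mathcal{N}\uplus\mathcal{N}_1\rangle$ then $\langle\{S_1..S_n\}\mid G;L;\mathcal{N}\rangle\Downarrow\langle\mathbb{M}\mid G_1;L_1\upharpoonright L;\mathcal{N}\rangle$. (SeqEmpty) the empty sequence $\Downarrow_{\mathsf{seq}}\mathsf{regular}$ with $G,L,\mathcal{N}$ unchanged. (SeqReg) if $S_1\Downarrow\mathsf{regular}$ from $(G,L)$ to $(G_1,L_1)$ and $\vec S\Downarrow_{\mathsf{seq}}\mathbb{M}$ from $(G_1,L_1)$ to $(G_2,L_2)$ then $S_1,\vec S\Downarrow_{\mathsf{seq}}\mathbb{M}$ from $(G,L)$ to $(G_2,L_2)$ (all under same $\mathcal{N}$). (SeqIrreg) if $S_1\Downarrow\mathbb{M}\in\{\mathsf{break},\mathsf{continue},\mathsf{leave}\}$ to $(G_1,L_1)$ then $S_1,\vec S\Downarrow_{\mathsf{seq}}\mathbb{M}$ to $(G_1,L_1)$. (FunDef) a function definition $\Downarrow\mathsf{regular}$, nothing changed. (VarDecl/TupleDecl) if $\langle M\mid G;L;\mathcal{N}\rangle\Downarrow_{\mathsf{exp}}\langle\langle\vec v\rangle\mid G_1;L_1;\mathcal{N}\rangle$ and $\vec x\notin\mathrm{dom}(L)$ then $\mathsf{let}\ \vec x:=M\Downarrow\mathsf{regular}$ with state $(G_1,L_1[\vec x\mapsto\vec v])$; assignment $\vec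 x:=M$ is identical but requires $\vec x\in\mathrm{dom}(L)$. (IfF) if $M\Downarrow_{\mathsf{exp}}\mathsf{false}$ to $(G_0,L_0)$ then $\mathsf{if}\ M\ S\Downarrow\mathsf{regular}$ to $(G_0,L_0)$. (IfT) if $M\Downarrow_{\mathsf{exp}}\mathsf{true}$ to $(G_0,L_0)$ and $S\Downarrow\mathbb{M}$ from there to $(G_1,L_1)$ then $\mathsf{if}\ M\ S\Downarrow\mathbb{M}$ to $(G_1,L_1)$. (SwD/SwC) with cases $\mathsf{case}\ c_i\ S_i$: if $M\Downarrow_{\mathsf{exp}} v$ with $v\notin\{c_1..c_n\}$ then evaluate $S_d$; if $M\Downarrow_{\mathsf{exp}}c_k$ with $c_k\notin\{c_1..c_{k-1}\}$ then evaluate $S_k$; the result is that of the chosen branch. (ForInit) if $n>0$ and $\{S_1..S_n\ \mathsf{for}\ \{\}\ M\ S_p\ S_b\}\Downarrow\mathbb{M}$ then $\mathsf{for}\ \{S_1..S_n\}\ M\ S_p\ S_b\Downarrow\mathbb{M}$ (same final state). For $W=\mathsf{for}\ \{\}\ M\ S_p\ S_b$: (ForFalse) if $M\Downarrow_{\mathsf{exp}}\mathsf{false}$ to $(G_1,L_1)$ then $W\Downarrow\mathsf{regular}$ to $(G_1,L_1)$; (ForHalt1) if $M\Downarrow_{\mathsf{exp}}\mathsf{true}$ to $(G_1,L_1)$ and $S_b\Downarrow\mathbb{M}_1$ to $(G_2,L_2)$ with $(\mathbb{M}_1,\mathbb{M}_2)\in\{(\mathsf{leave},\mathsf{leave}),(\mathsf{break},\mathsf{regular})\}$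 then $W\Downarrow\mathbb{M}_2$ to $(G_2,L_2)$; (ForHalt2) if $M$ true, $S_b\Downarrow\mathbb{M}'\in\{\mathsf{regular},\mathsf{continue}\}$ to $(G_2,L_2)$, $S_p\Downarrow\mathsf{leave}$ to $(G_3,L_3)$ then $W\Downarrow\mathsf{leave}$ to $(G_3,L_3)$; (ForLoop) if $M$ true, $S_b\Downarrow\mathbb{M}'\in\{\mathsf{regular},\mathsf{continue}\}$, $S_p\Downarrow\mathsf{regular}$ to $(G_3,L_3)$ and $W\Downarrow\mathbb{M}$ from $(G_3,L_3)$ to $(G_4,L_4)$ then $W\Downarrow\mathbb{M}$ to $(G_4,L_4)$. (Ident) $x\Downarrow_{\mathsf{exp}}L(x)$, nothing changed. (FunCall) if $\langle M_n\mid G;L;\mathcal{N}\rangle\Downarrow_{\mathsf{exp}}\langle v_n\mid G_1;L_1;\mathcal{N}\rangle$, …, $\langle M_1\mid G_{n-1};L_{n-1};\mathcal{N}\rangle\Downarrow_{\mathsf{exp}}\langle v_1\mid G_n;L_n;\mathcal{N}\rangle$ (right to left) and $\langle S_b\mid G_n;L_f;\mathcal{N}\rangle\Downarrow\langle\mathbb{M}\mid G'';L';\mathcal{N}\rangle$ then $\langle f(M_1..M_n)\mid G;L;\mathcal{N}\rangle\Downarrow_{\mathsf{exp}}\langle\langle L'(z_1),..,L'(z_m)\rangle\mid G'';L_n;\mathcal{N}\rangle$. (OpcCall) same argument evaluation, then if $\langle op(v_1..v_n)\mid G_n\rangle\Downarrow_{\mathsf{opc}}\langle v'_1..v'_m\mid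 G''\rangle$ the result is $\langle\langle v'_1..v'_m\rangle\mid G'';L_n;\mathcal{N}\rangle$. Big-step never produces external modes. Small-step: evaluation contexts $E ::= [\,] \mid \{E,\vec S\}^{\mathcal{N}}_L \mid \mathsf{let}\ \vec x:=E \mid \vec x:=E \mid E_e \mid \mathsf{Cnt}[E] \mid \mathsf{Brk}[E] \mid \mathsf{if}\ E_e\ \{S^*\} \mid \mathsf{switch}\ E_e\ \dots$ and $E_e ::= [\,] \mid f(\vec M,E_e,\vec v) \mid op(\vec M,E_e,\vec v) \mid \mathsf{Frame}^{\vec x}_L[E]$. Base rules (with $G$ unchanged except for opcodes): $\langle\{S_1..S_n\}\mid L;\mathcal{N}\rangle\to\langle\{S_1,..,S_n\}^{\mathcal{N}}_L\mid L;\mathcal{N}\uplus\mathrm{funs}(\{S_1..S_n\})\rangle$ for $n>0$; $\{\}\to\mathsf{regular}$; $\langle\{\mathsf{regular},\vec S\}^{\mathcal{N}}_L\mid L_1;\mathcal{N}_1\rangle\to\langle\{\vec S\}^{\mathcal{N}}_L\mid L_1;\mathcal{N}_1\rangle$ for nonempty $\vec S$; $\langle\{\mathsf{regular}\}^{\mathcal{N}}_L\mid L_1;\mathcal{N}_1\rangle\to\langle\mathsf{regular}\mid L_1\upharpoonright L;\mathcal{N}\rangle$; $\langle\{\mathbb{M},\vec S\}^{\mathcal{N}}_L\mid L_1;\mathcal{N}_1\rangle\to\langle\mathbb{M}\mid L_1\upharpoonright L;\mathcal{N}\rangle$ for $\mathbb{M}\in\{\mathsf{break},\mathsf{continue},\mathsf{leave}\}$;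 a function definition $\to\mathsf{regular}$; $\langle\mathsf{let}\ \vec x:=\langle\vec v\rangle\mid L\rangle\to\langle\mathsf{regular}\mid L[\vec x\mapsto\vec v]\rangle$ if $\vec x\notin\mathrm{dom}(L)$ (assignment: same with $\vec x\in\mathrm{dom}(L)$); $\mathsf{if}\ \mathsf{false}\ S\to\mathsf{regular}$; $\mathsf{if}\ \mathsf{true}\ S\to S$; $\mathsf{switch}\ v\dots\to S_d$ if $v\notin\{c_1..c_n\}$; $\mathsf{switch}\ c_k\dots\to S_k$ if $c_k\notin\{c_1..c_{k-1}\}$; $\mathsf{for}\ \{S_1..S_n\}\ M\ S_p\ S_b\to\{S_1..S_n\ \mathsf{for}\ \{\}\ M\ S_p\ S_b\}$ for $n>0$; $\mathsf{for}\ \{\}\ M\ S_p\ S_b\to\mathsf{Brk}[\mathsf{if}\ M\ \{\mathsf{Cnt}[S_b]\ S_p\ \mathsf{for}\ \{\}\ M\ S_p\ S_b\}]$; $\mathsf{Cnt}[\mathbb{M}]\to\mathbb{M}$ for $\mathbb{M}\in\{\mathsf{regular},\mathsf{break},\mathsf{leave}\}$, $\mathsf{Cnt}[\mathsf{continue}]\to\mathsf{regular}$; $\mathsf{Brk}[\mathbb{M}]\to\mathbb{M}$ for $\mathbb{M}\in\{\mathsf{regular},\mathsf{leave}\}$, $\mathsf{Brk}[\mathsf{break}]\to\mathsf{regular}$; $\langle x\mid L\rangle\to\langle L(x)\mid L\rangle$ for $x\in\mathrm{dom}(L)$; $\langle f(\vec v)\mid L;\mathcal{N}\rangle\to\langle\mathsf{Frame}^{\vec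 z}_L[S_b]\mid L_f;\mathcal{N}\rangle$; $\langle\mathsf{Frame}^{z_1..z_m}_L[\mathbb{M}]\mid L';\mathcal{N}\rangle\to\langle\langle L'(z_1),..,L'(z_m)\rangle\mid L;\mathcal{N}\rangle$ for $\mathbb{M}\in\{\mathsf{leave},\mathsf{regular}\}$; $\langle op(\vec v)\mid G;L;\mathcal{N}\rangle\to\langle S'\mid G';L;\mathcal{N}\rangle$ if $\langle op(\vec v)\mid G\rangle\Downarrow_{\mathsf{opc}}\langle S'\mid G'\rangle$. Top-level rules: $\langle E[S]\mid G;L;\mathcal{N}\rangle\to\langle E[S']\mid G';L';\mathcal{N}'\rangle$ whenever $\langle S\mid G;L;\mathcal{N}\rangle\to\langle S'\mid G';L';\mathcal{N}'\rangle$ by a base rule or recursively; and $\langle E[\mathcal{M}]\mid G;L;\mathcal{N}\rangle\to\langle\mathcal{M}\mid G';L';\mathcal{N}'\rangle$ for external modes $\mathcal{M}$. $\to^*$ is the reflexive-transitive closure.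
   Formalization: S has break and continue only within for-loop bodies, never in initialisation or post blocks or directly in function bodies; every function body in 𝒩 is such a source block; big-step also evaluates literals, break, continue, leave and expression statements. Each condition added here is assumed in the paper as well or is needed for the statement above to hold. *)

(* Defs.v *)
From Stdlib Require Import List.
Import ListNotations.

Record dialect := {
  ident : Type;
  ident_eq_dec : forall x y : ident, {x = y} + {x <> y};
  val : Type;
  zero : val;
  is_true_val : val -> Prop;
  is_false_val : val -> Prop;
  ext_mode : Type;
  opcode : Type;
  genv : Type;
  (* <op(v1..vn) | G> ⇓opc <S' | G'>, S' a tuple of values or an external mode *)
  opc_step : genv -> opcode -> list val -> (list val + ext_mode) -> genv -> Prop
}.

Section Yul.
Context {D : dialect}.

Local Notation ident := (ident D).
Local Notation val := (val D).

(* Irregular modes (regular is the empty tuple, see below). *)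
Inductive mode : Type :=
| MBreak | MContinue | MLeave | MExt (e : ext_mode D).

(* Conventions: a literal value v is the 1-tuple [Tup [v]] (so <v> = v), and
   the mode regular is the empty tuple [Tup []] (so <> = regular). *)
Inductive term : Type :=
| Tup (vs : list val)
| Var (x : ident)
| FCall (f : ident) (args : list term)
| OCall (op : opcode D) (args : list term)
| Frame (zs : list ident) (L : ident -> option val) (body : term)
| Block (ss : list term)
| FunDef (f : ident) (ys zs : list ident) (body : list term)
| Let (xs : list ident) (e : term)
| Assign (xs : list ident) (e : term)
| If (c : term) (body : list term)
| Switch (c : term) (cases : list (val * list term)) (dflt : list term)
| For (init : list term) (c : term) (post body : list term)
| Brk (t : term)
| Cnt (t : term)
| Mode (m : mode)
| Scoped (ss : list term)
         (N : ident -> option (list ident * list ident * term))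
         (L : ident -> option val).

Definition lstate : Type := ident -> option val.
Definition nspace : Type := ident -> option (list ident * list ident * term).

Definition regular : term := Tup [].
Definition lit (v : val) : term := Tup [v].

Definition fin_dom {A : Type} (m : ident -> option A) : Prop :=
  exists l : list ident, forall x, m x <> None -> In x l.

Definition restrict (L1 L : lstate) : lstate :=
  fun x => match L x with Some _ => L1 x | None => None end.

Definition disjoint {A B : Type} (m1 : ident -> option A) (m2 : ident -> option B) : Prop :=
  forall x, m1 x = None \/ m2 x = None.

Definition dunion {A : Type} (m1 m2 : ident -> option A) : ident -> option A :=
  fun x => match m1 x with Some a => Some a | None => m2 x end.

Definition upd1 (L : lstate) (x : ident) (v : val) : lstate :=
  fun y => if ident_eq_dec D y x then Some v else L y.

Fixpoint upd (L : lstate) (xs : list ident) (vs : list val) : lstate :=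
  match xs, vs with
  | x :: xs', v :: vs' => upd (upd1 L x v) xs' vs'
  | _, _ => L
  end.

(* L_f = {y_i |-> v_i} ⊎ {z_j |-> 0}  (used under NoDup (ys ++ zs)) *)
Definition locals_f (ys : list ident) (vs : list val) (zs : list ident) : lstate :=
  upd (upd (fun _ => None) ys vs) zs (repeat (zero D) (length zs)).

Fixpoint funs (ss : list term) : nspace :=
  match ss with
  | [] => fun _ => None
  | FunDef f ys zs b :: r =>
      fun g => if ident_eq_dec D g f then Some (ys, zs, Block b) else funs r g
  | _ :: r => funs r
  end.

(* ---------- source syntax ----------
   [src_stmt lp S]: S is generated by the source grammar and, following Yul's
   syntactic rules, break/continue only occur inside a for-loop body
   ([lp] = true), not in init/post blocks nor in function bodies outside a loop. *)
Inductive src_expr : term -> Prop :=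
| src_lit v : src_expr (Tup [v])
| src_var x : src_expr (Var x)
| src_fcall f args : Forall src_expr args -> src_expr (FCall f args)
| src_ocall op args : Forall src_expr args -> src_expr (OCall op args).

Inductive src_stmt : bool -> term -> Prop :=
| src_block lp ss : Forall (src_stmt lp) ss -> src_stmt lp (Block ss)
| src_fundef lp f ys zs b : Forall (src_stmt false) b -> src_stmt lp (FunDef f ys zs b)
| src_let lp xs e : src_expr e -> src_stmt lp (Let xs e)
| src_assign lp xs e : src_expr e -> src_stmt lp (Assign xs e)
| src_exp lp e : src_expr e -> src_stmt lp e
| src_if lp c b : src_expr c -> Forall (src_stmt lp) b -> src_stmt lp (If c b)
| src_switch lp c cs d : src_expr c -> Forall (src_stmt lp) (concat (map snd cs)) ->
    Forall (src_stmt lp) d -> src_stmt lp (Switch c cs d)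
| src_for lp i c p b : Forall (src_stmt false) i -> src_expr c ->
    Forall (src_stmt false) p -> Forall (src_stmt true) b -> src_stmt lp (For i c p b)
| src_break : src_stmt true (Mode MBreak)
| src_continue : src_stmt true (Mode MContinue)
| src_leave lp : src_stmt lp (Mode MLeave).

Definition src_nspace (N : nspace) : Prop :=
  forall f ys zs B, N f = Some (ys, zs, B) ->
    exists b, B = Block b /\ Forall (src_stmt false) b.

Inductive bs : term -> genv D -> lstate -> nspace -> term -> genv D -> lstate -> nspace -> Prop :=
| bs_block ss G L N M G1 L1 :
    disjoint N (funs ss) ->
    bs_seq ss G L (dunion N (funs ss)) M G1 L1 (dunion N (funs ss)) ->
    bs (Block ss) G L N M G1 (restrict L1 L) N
| bs_irreg m G L N :
    m = MBreak \/ m = MContinue \/ m = MLeave ->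
    bs (Mode m) G L N (Mode m) G L N
| bs_fundef f ys zs b G L N :
    bs (FunDef f ys zs b) G L N regular G L N
| bs_let xs e vs G L N G1 L1 :
    bs_exp e G L N vs G1 L1 N ->
    (forall x, In x xs -> L x = None) -> length xs = length vs ->
    bs (Let xs e) G L N regular G1 (upd L1 xs vs) N
| bs_assign xs e vs G L N G1 L1 :
    bs_exp e G L N vs G1 L1 N ->
    (forall x, In x xs -> L x <> None) -> length xs = length vs ->
    bs (Assign xs e) G L N regular G1 (upd L1 xs vs) N
| bs_expstmt e G L N G1 L1 :
    bs_exp e G L N [] G1 L1 N ->
    bs e G L N regular G1 L1 N
| bs_if_false c b v G L N G0 L0 :
    bs_exp c G L N [v] G0 L0 N -> is_false_val D v ->
    bs (If c b) G L N regular G0 L0 N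
| bs_if_true c b v G L N G0 L0 M G1 L1 :
    bs_exp c G L N [v] G0 L0 N -> is_true_val D v ->
    bs (Block b) G0 L0 N M G1 L1 N ->
    bs (If c b) G L N M G1 L1 N
| bs_switch_default c cs d v G L N G0 L0 M G1 L1 :
    bs_exp c G L N [v] G0 L0 N -> ~ In v (map fst cs) ->
    bs (Block d) G0 L0 N M G1 L1 N ->
    bs (Switch c cs d) G L N M G1 L1 N
| bs_switch_case c pre ck sk post d G L N G0 L0 M G1 L1 :
    bs_exp c G L N [ck] G0 L0 N -> ~ In ck (map fst pre) ->
    bs (Block sk) G0 L0 N M G1 L1 N ->
    bs (Switch c (pre ++ (ck, sk) :: post) d) G L N M G1 L1 N
| bs_for_init i c p b G L N M G1 L1 :
    i <> [] ->
    bs (Block (i ++ [For [] c p b])) G L N M G1 L1 N ->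
    bs (For i c p b) G L N M G1 L1 N
| bs_for_false c p b v G L N G1 L1 :
    bs_exp c G L N [v] G1 L1 N -> is_false_val D v ->
    bs (For [] c p b) G L N regular G1 L1 N
| bs_for_halt1 c p b v G L N G1 L1 M1 G2 L2 M2 :
    bs_exp c G L N [v] G1 L1 N -> is_true_val D v ->
    bs (Block b) G1 L1 N M1 G2 L2 N ->
    (M1 = Mode MLeave /\ M2 = Mode MLeave \/ M1 = Mode MBreak /\ M2 = regular) ->
    bs (For [] c p b) G L N M2 G2 L2 N
| bs_for_halt2 c p b v G L N G1 L1 M' G2 L2 G3 L3 :
    bs_exp c G L N [v] G1 L1 N -> is_true_val D v ->
    bs (Block b) G1 L1 N M' G2 L2 N -> (M' = regular \/ M' = Mode MContinue) ->
    bs (Block p) G2 L2 N (Mode MLeave) G3 L3 N ->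
    bs (For [] c p b) G L N (Mode MLeave) G3 L3 N
| bs_for_loop c p b v G L N G1 L1 M' G2 L2 G3 L3 M G4 L4 :
    bs_exp c G L N [v] G1 L1 N -> is_true_val D v ->
    bs (Block b) G1 L1 N M' G2 L2 N -> (M' = regular \/ M' = Mode MContinue) ->
    bs (Block p) G2 L2 N regular G3 L3 N ->
    bs (For [] c p b) G3 L3 N M G4 L4 N ->
    bs (For [] c p b) G L N M G4 L4 N
with bs_seq : list term -> genv D -> lstate -> nspace -> term -> genv D -> lstate -> nspace -> Prop :=
| bs_seq_empty G L N : bs_seq [] G L N regular G L N
| bs_seq_reg s ss G L N G1 L1 M G2 L2 :
    bs s G L N regular G1 L1 N -> bs_seq ss G1 L1 N M G2 L2 N ->
    bs_seq (s :: ss) G L N M G2 L2 N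
| bs_seq_irreg s ss G L N m G1 L1 :
    m = MBreak \/ m = MContinue \/ m = MLeave ->
    bs s G L N (Mode m) G1 L1 N ->
    bs_seq (s :: ss) G L N (Mode m) G1 L1 N
with bs_exp : term -> genv D -> lstate -> nspace -> list val -> genv D -> lstate -> nspace -> Prop :=
| bs_lit v G L N : bs_exp (Tup [v]) G L N [v] G L N
| bs_ident x v G L N : L x = Some v -> bs_exp (Var x) G L N [v] G L N
| bs_funcall f args vs G L N Gn Ln ys zs Sb M G'' L' rs :
    bs_args args G L N vs Gn Ln N ->
    N f = Some (ys, zs, Sb) ->
    length vs = length ys -> NoDup (ys ++ zs) ->
    bs Sb Gn (locals_f ys vs zs) N M G'' L' N ->
    Forall2 (fun z r => L' z = Some r) zs rs ->
    bs_exp (FCall f args) G L N rs G'' Ln N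
| bs_opccall op args vs G L N Gn Ln rs G'' :
    bs_args args G L N vs Gn Ln N ->
    opc_step D Gn op vs (inl rs) G'' ->
    bs_exp (OCall op args) G L N rs G'' Ln N
(* arguments are evaluated right to left, each to a single value *)
with bs_args : list term -> genv D -> lstate -> nspace -> list val -> genv D -> lstate -> nspace -> Prop :=
| bs_args_nil G L N : bs_args [] G L N [] G L N
| bs_args_snoc Ms M v vs G L N G1 L1 G2 L2 :
    bs_exp M G L N [v] G1 L1 N -> bs_args Ms G1 L1 N vs G2 L2 N ->
    bs_args (Ms ++ [M]) G L N (vs ++ [v]) G2 L2 N.

Inductive ctx : Type :=
| CHole
| CScoped (E : ctx) (rest : list term) (N : nspace) (L : lstate)
| CLet (xs : list ident) (E : ctx)
| CAssign (xs : list ident) (E : ctx)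
| CExp (E : ectx)
| CCnt (E : ctx)
| CBrk (E : ctx)
| CIf (E : ectx) (body : list term)
| CSwitch (E : ectx) (cases : list (val * list term)) (dflt : list term)
with ectx : Type :=
| EHole
| EFCall (f : ident) (Ms : list term) (E : ectx) (vs : list val)
| EOCall (op : opcode D) (Ms : list term) (E : ectx) (vs : list val)
| EFrame (zs : list ident) (L : lstate) (E : ctx).

Fixpoint plug (E : ctx) (t : term) : term :=
  match E with
  | CHole => t
  | CScoped E' rest N L => Scoped (plug E' t :: rest) N L
  | CLet xs E' => Let xs (plug E' t)
  | CAssign xs E' => Assign xs (plug E' t)
  | CExp E' => eplug E' t
  | CCnt E' => Cnt (plug E' t)
  | CBrk E' => Brk (plug E' t)
  | CIf E' b => If (eplug E' t) b
  | CSwitch E' cs d => Switch (eplug E' t) cs d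
  end
with eplug (E : ectx) (t : term) : term :=
  match E with
  | EHole => t
  | EFCall f Ms E' vs => FCall f (Ms ++ eplug E' t :: map lit vs)
  | EOCall op Ms E' vs => OCall op (Ms ++ eplug E' t :: map lit vs)
  | EFrame zs L E' => Frame zs L (plug E' t)
  end.

Definition config : Type := (term * genv D * lstate * nspace)%type.

Inductive base_step : config -> config -> Prop :=
| ss_block ss G L N :
    ss <> [] -> disjoint N (funs ss) ->
    base_step (Block ss, G, L, N) (Scoped ss N L, G, L, dunion N (funs ss))
| ss_block_empty G L N :
    base_step (Block [], G, L, N) (regular, G, L, N)
| ss_scoped_reg s ss N0 L0 G L1 N1 :
    base_step (Scoped (regular :: s :: ss) N0 L0, G, L1, N1) (Scoped (s :: ss) N0 L0, G, L1, N1)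
| ss_scoped_last N0 L0 G L1 N1 :
    base_step (Scoped [regular] N0 L0, G, L1, N1) (regular, G, restrict L1 L0, N0)
| ss_scoped_irreg m ss N0 L0 G L1 N1 :
    m = MBreak \/ m = MContinue \/ m = MLeave ->
    base_step (Scoped (Mode m :: ss) N0 L0, G, L1, N1) (Mode m, G, restrict L1 L0, N0)
| ss_fundef f ys zs b G L N :
    base_step (FunDef f ys zs b, G, L, N) (regular, G, L, N)
| ss_let xs vs G L N :
    (forall x, In x xs -> L x = None) -> length xs = length vs ->
    base_step (Let xs (Tup vs), G, L, N) (regular, G, upd L xs vs, N)
| ss_assign xs vs G L N :
    (forall x, In x xs -> L x <> None) -> length xs = length vs ->
    base_step (Assign xs (Tup vs), G, L, N) (regular, G, upd L xs vs, N)
| ss_if_false v b G L N :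
    is_false_val D v -> base_step (If (lit v) b, G, L, N) (regular, G, L, N)
| ss_if_true v b G L N :
    is_true_val D v -> base_step (If (lit v) b, G, L, N) (Block b, G, L, N)
| ss_switch_default v cs d G L N :
    ~ In v (map fst cs) ->
    base_step (Switch (lit v) cs d, G, L, N) (Block d, G, L, N)
| ss_switch_case pre ck sk post d G L N :
    ~ In ck (map fst pre) ->
    base_step (Switch (lit ck) (pre ++ (ck, sk) :: post) d, G, L, N) (Block sk, G, L, N)
| ss_for_init i c p b G L N :
    i <> [] ->
    base_step (For i c p b, G, L, N) (Block (i ++ [For [] c p b]), G, L, N)
| ss_for c p b G L N :
    base_step (For [] c p b, G, L, N)
              (Brk (If c [Cnt (Block b); Block p; For [] c p b]), G, L, N)
| ss_cnt_reg G L N : base_step (Cnt regular, G, L, N) (regular, G, L, N)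
| ss_cnt_break G L N : base_step (Cnt (Mode MBreak), G, L, N) (Mode MBreak, G, L, N)
| ss_cnt_leave G L N : base_step (Cnt (Mode MLeave), G, L, N) (Mode MLeave, G, L, N)
| ss_cnt_continue G L N : base_step (Cnt (Mode MContinue), G, L, N) (regular, G, L, N)
| ss_brk_reg G L N : base_step (Brk regular, G, L, N) (regular, G, L, N)
| ss_brk_leave G L N : base_step (Brk (Mode MLeave), G, L, N) (Mode MLeave, G, L, N)
| ss_brk_break G L N : base_step (Brk (Mode MBreak), G, L, N) (regular, G, L, N)
| ss_var x v G L N :
    L x = Some v -> base_step (Var x, G, L, N) (lit v, G, L, N)
| ss_funcall f vs ys zs Sb G L N :
    N f = Some (ys, zs, Sb) -> length vs = length ys -> NoDup (ys ++ zs) ->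
    base_step (FCall f (map lit vs), G, L, N) (Frame zs L Sb, G, locals_f ys vs zs, N)
| ss_frame zs L M G L' N rs :
    (M = regular \/ M = Mode MLeave) ->
    Forall2 (fun z r => L' z = Some r) zs rs ->
    base_step (Frame zs L M, G, L', N) (Tup rs, G, L, N)
| ss_opc_vals op vs G L N rs G' :
    opc_step D G op vs (inl rs) G' ->
    base_step (OCall op (map lit vs), G, L, N) (Tup rs, G', L, N)
| ss_opc_ext op vs G L N e G' :
    opc_step D G op vs (inr e) G' ->
    base_step (OCall op (map lit vs), G, L, N) (Mode (MExt e), G', L, N).

Inductive step : config -> config -> Prop :=
| step_base c c' : base_step c c' -> step c c'
| step_ctx E t G L N t' G' L' N' :
    step (t, G, L, N) (t', G', L', N') ->
    step (plug E t, G, L, N) (plug E t', G', L', N')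
| step_ext E e G L N :
    step (plug E (Mode (MExt e)), G, L, N) (Mode (MExt e), G, L, N).

Inductive steps : config -> config -> Prop :=
| steps_refl c : steps c c
| steps_trans c1 c2 c3 : step c1 c2 -> steps c2 c3 -> steps c1 c3.

End Yul.

(* Main.v *)
Require Import Defs.
From Stdlib Require Import List Wf_nat Lia FunctionalExtensionality.
Import ListNotations.

Section Proof.
Context {D : dialect}.

Definition stmt_res (r : @term D) : Prop :=
  r = regular \/ r = Mode MBreak \/ r = Mode MContinue \/ r = Mode MLeave.

Definition final (r : @term D) : Prop :=
  (exists vs, r = Tup vs) \/ (exists m, r = Mode m /\ (m = MBreak \/ m = MContinue \/ m = MLeave)).
Definition nonfinal (t : @term D) : Prop := ~ final t.

Lemma steps_one c1 c2 : @step D c1 c2 -> steps c1 c2.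
Proof. intros; econstructor; eauto; constructor. Qed.

Lemma steps_app c1 c2 c3 : @steps D c1 c2 -> steps c2 c3 -> steps c1 c3.
Proof. induction 1; intros; auto. econstructor; eauto. Qed.

Lemma steps_ctx E t G L N t' G' L' N' :
  @steps D (t,G,L,N) (t',G',L',N') -> steps (plug E t, G, L, N) (plug E t', G', L', N').
Proof.
  intro H. remember (t,G,L,N) as c1. remember (t',G',L',N') as c2.
  revert t G L N Heqc1. induction H; intros; subst.
  - inversion Heqc1; subst. constructor.
  - destruct c2 as [[[t2 G2] L2] N2].
    econstructor. apply step_ctx. eauto. eauto.
Qed.

Lemma base_steps c c' : @base_step D c c' -> steps c c'.
Proof. intros; apply steps_one; constructor; auto. Qed.

Lemma ctx_step E t G L N t' G' L' N' :
  @base_step D (t,G,L,N) (t',G',L',N') -> steps (plug E t, G, L, N) (plug E t', G', L', N').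
Proof. intros. apply steps_ctx. apply base_steps; auto. Qed.

Lemma restrict_self (L : @lstate D) : restrict L L = L.
Proof. apply functional_extensionality; intro x; unfold restrict; destruct (L x); auto. Qed.

Lemma restrict_sub (L L' : @lstate D) : (forall x, L x = None -> L' x = None) -> restrict L' L = L'.
Proof. intro H; apply functional_extensionality; intro x; unfold restrict.
  destruct (L x) eqn:E; auto. symmetry; auto. Qed.

Lemma dunion_empty {A} (N : ident D -> option A) : dunion N (fun _ => None) = N.
Proof. apply functional_extensionality; intro x; unfold dunion; destruct (N x); auto. Qed.

Lemma src_nspace_dunion lp N ss : src_nspace N -> Forall (@src_stmt D lp) ss -> src_nspace (dunion N (funs ss)).
Proof.
  intros HN Hs f ys zs B. unfold dunion. destruct (N f) eqn:E.
  - intro H1; inversion H1; subst. eapply HN; eauto.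
  - clear E. induction Hs; simpl; intro H1; try discriminate.
    destruct x; auto.
    destruct (ident_eq_dec D f f0).
    + inversion H1; subst. inversion H; subst; eauto. match goal with h: src_expr _ |- _ => inversion h end.
    + auto.
Qed.

Scheme bs_mut := Induction for bs Sort Prop
with bs_seq_mut := Induction for bs_seq Sort Prop
with bs_exp_mut := Induction for bs_exp Sort Prop
with bs_args_mut := Induction for bs_args Sort Prop.

Lemma bs_exp_L : forall e G L N vs G' L' N', @bs_exp D e G L N vs G' L' N' -> L' = L.
Proof.
  intros. apply (bs_exp_mut D (fun _ _ _ _ _ _ _ _ _ => True) (fun _ _ _ _ _ _ _ _ _ => True)
    (fun _ _ L _ _ _ L' _ _ => L' = L) (fun _ _ L _ _ _ L' _ _ => L' = L) ) with (t := e) (g:=G) (n:=N) (l0:=vs) (g0:=G') (n0:=N'); intros; subst; auto.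
Qed.

Lemma bs_N S G L N M G' L' N' : @bs D S G L N M G' L' N' -> N' = N.
Proof. destruct 1; auto. Qed.
Lemma bs_exp_N S G L N M G' L' N' : @bs_exp D S G L N M G' L' N' -> N' = N.
Proof. destruct 1; auto. Qed.

Lemma bs_block_dom ss G L N M G' L' N' : @bs D (Block ss) G L N M G' L' N' -> forall x, L x = None -> L' x = None.
Proof. intro H; inversion H; subst. intros x Hx; unfold restrict; rewrite Hx; auto.
  inversion H0. Qed.

Lemma bs_for_dom S G L N M G' L' N' : @bs D S G L N M G' L' N' ->
  forall c p b, S = For [] c p b -> forall x, L x = None -> L' x = None.
Proof.
  induction 1; intros c0 p0 b0 HS x Hx; try discriminate.
  - subst; inversion H.
  - inversion HS; subst; congruence.
  - apply bs_exp_L in H; subst; auto.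
  - inversion HS; subst. apply bs_exp_L in H; subst. eapply bs_block_dom; eauto.
  - inversion HS; subst. apply bs_exp_L in H; subst.
    eapply bs_block_dom; eauto. eapply bs_block_dom; eauto.
  - inversion HS; subst. apply bs_exp_L in H; subst.
    eapply IHbs3; eauto. eapply bs_block_dom; eauto. eapply bs_block_dom; eauto.
Qed.


Ltac srcinv H := inversion H; subst; try match goal with h : src_expr _ |- _ => solve [inversion h] end.

Definition noBC (M : @term D) := M <> Mode MBreak /\ M <> Mode MContinue.

Definition Pbs (S : @term D) (G : genv D) (L : lstate) (N : nspace) (M : term) (G' : genv D) (L' : lstate) (N' : @nspace D) := forall lp, src_stmt lp S -> src_nspace N ->
  steps (S,G,L,N) (M,G',L',N') /\ stmt_res M /\ (lp = false -> noBC M).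
Definition Pseq (ss : list (@term D)) (G : genv D) (L : lstate) (N : nspace) (M : term) (G' : genv D) (L' : lstate) (N' : @nspace D) := forall lp, Forall (src_stmt lp) ss -> src_nspace N ->
  stmt_res M /\ (lp = false -> noBC M) /\
  (ss <> [] -> forall N0 L0, steps (Scoped ss N0 L0, G, L, N) (M, G', restrict L' L0, N0)).
Definition Pexp (e : @term D) (G : genv D) (L : lstate) (N : nspace) (vs : list (val D)) (G' : genv D) (L' : lstate) (N' : @nspace D) := src_expr e -> src_nspace N ->
  steps (e,G,L,N) (Tup vs, G', L', N').
Definition Pargs (args : list (@term D)) (G : genv D) (L : lstate) (N : nspace) (vs : list (val D)) (G' : genv D) (L' : lstate) (N' : @nspace D) := Forall src_expr args -> src_nspace N ->
  forall ws, (forall f, steps (FCall f (args ++ map lit ws),G,L,N) (FCall f (map lit (vs ++ ws)),G',L',N')) /\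
             (forall op, steps (OCall op (args ++ map lit ws),G,L,N) (OCall op (map lit (vs ++ ws)),G',L',N')).

Lemma loop_enter c p b G L N :
  @steps D (Brk (Block [Cnt (Block b); Block p; For [] c p b]), G, L, N)
        (Brk (Scoped [Cnt (Block b); Block p; For [] c p b] N L), G, L, N).
Proof.
  assert (Hb : base_step (Block [Cnt (Block b); Block p; For [] c p b], G, L, N)
     (Scoped [Cnt (Block b); Block p; For [] c p b] N L, G, L, dunion N (funs [Cnt (Block b); Block p; For [] c p b])))
    by (constructor; [discriminate | intro x; right; reflexivity]).
  apply (ctx_step (CBrk CHole)) in Hb. simpl funs in Hb. rewrite dunion_empty in Hb. exact Hb.
Qed.

Lemma Forall_case {A} (P : A -> Prop) pre (ck : val D) sk post :
  Forall P (concat (map snd (pre ++ (ck, sk) :: post))) -> Forall P sk.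
Proof. intro H. rewrite map_app, concat_app in H. apply Forall_app in H. destruct H as [_ H].
  simpl in H. apply Forall_app in H. tauto. Qed.

Lemma stmt_noBC M : stmt_res M -> noBC M -> M = regular \/ M = Mode MLeave.
Proof. unfold stmt_res, noBC; intuition. Qed.

Lemma bs_to_steps_all : forall S G L N M G' L' N', @bs D S G L N M G' L' N' -> Pbs S G L N M G' L' N'.
Proof.
  apply (bs_mut D (fun a b c d e f g h _ => Pbs a b c d e f g h) (fun a b c d e f g h _ => Pseq a b c d e f g h) (fun a b c d e f g h _ => Pexp a b c d e f g h) (fun a b c d e f g h _ => Pargs a b c d e f g h)); unfold Pbs, Pseq, Pexp, Pargs.
  -
    intros ss G L N M G1 L1 Hdis Hseq IH lp Hs HN. srcinv Hs.
    destruct ss as [|s ss'].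
    + inversion Hseq; subst. rewrite restrict_self. split; [apply base_steps; constructor|].
      split; [left; auto|]. intros; split; discriminate.
    + match goal with h : Forall _ _ |- _ => destruct (IH lp h (src_nspace_dunion _ _ _ HN h)) as [Hr [Hbc Hst]] end.
      split; [|split; auto].
      eapply steps_app. apply base_steps. constructor; [discriminate|auto]. apply Hst; discriminate.
  -
    intros m G L N Hm lp Hs HN. split; [constructor|]. split.
    + unfold stmt_res; destruct Hm as [ -> | [ -> | -> ]]; auto.
    + intro; subst lp. srcinv Hs. split; discriminate.
  - intros. split; [apply base_steps; constructor|]. split; [left; auto| split; discriminate].
  -
    intros xs e vs G L N G1 L1 Hexp IH Hxs Hlen lp Hs HN. srcinv Hs.
    split; [|split; [left; auto| split; discriminate]].
    eapply steps_app. apply (steps_ctx (CLet xs CHole)). apply IH; auto.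
    apply base_steps. simpl. apply bs_exp_L in Hexp; subst. constructor; auto.
  -
    intros xs e vs G L N G1 L1 Hexp IH Hxs Hlen lp Hs HN. srcinv Hs.
    split; [|split; [left; auto| split; discriminate]].
    eapply steps_app. apply (steps_ctx (CAssign xs CHole)). apply IH; auto.
    apply base_steps. simpl. apply bs_exp_L in Hexp; subst. constructor; auto.
  -
    intros e G L N G1 L1 Hexp IH lp Hs HN.
    inversion Hs; subst; try solve [inversion Hexp].
    split; [apply IH; auto|]. split; [left; auto| split; discriminate].
  -
    intros c b v G L N G0 L0 Hc IH Hf lp Hs HN. srcinv Hs.
    split; [|split; [left; auto| split; discriminate]].
    eapply steps_app. apply (steps_ctx (CIf EHole b)). apply IH; auto.
    apply base_steps. simpl. apply ss_if_false; auto.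
  -
    intros c b v G L N G0 L0 M G1 L1 Hc IH Ht Hb IHb lp Hs HN. srcinv Hs.
    assert (Hsb : src_stmt lp (Block b)) by (constructor; assumption).
    destruct (IHb lp Hsb HN) as [Hst [Hr Hbc]].
    split; [|split; auto].
    eapply steps_app. apply (steps_ctx (CIf EHole b)). apply IH; auto.
    eapply steps_app. apply base_steps. simpl. apply ss_if_true; auto. auto.
  -
    intros c cs d v G L N G0 L0 M G1 L1 Hc IH Hn Hb IHb lp Hs HN. srcinv Hs.
    assert (Hsb : src_stmt lp (Block d)) by (constructor; assumption).
    destruct (IHb lp Hsb HN) as [Hst [Hr Hbc]].
    split; [|split; auto].
    eapply steps_app. apply (steps_ctx (CSwitch EHole cs d)). apply IH; auto.
    eapply steps_app. apply base_steps. simpl. apply ss_switch_default; auto. auto.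
  -
    intros c pre ck sk post d G L N G0 L0 M G1 L1 Hc IH Hn Hb IHb lp Hs HN. srcinv Hs.
    assert (Hsb : src_stmt lp (Block sk)) by (constructor; eapply Forall_case; eassumption).
    destruct (IHb lp Hsb HN) as [Hst [Hr Hbc]].
    split; [|split; auto].
    eapply steps_app. apply (steps_ctx (CSwitch EHole _ d)). apply IH; auto.
    eapply steps_app. apply base_steps. simpl. apply ss_switch_case; auto. auto.
  -
    intros i c p b G L N M G1 L1 Hi Hb IHb lp Hs HN. srcinv Hs.
    assert (Hsrc : src_stmt false (Block (i ++ [For [] c p b]))).
    { constructor. apply Forall_app; split; auto. constructor; [|constructor]. apply src_for; auto. }
    destruct (IHb false Hsrc HN) as [Hst [Hr Hbc]].
    split; [|split; auto].
    eapply steps_app. apply base_steps. apply ss_for_init; auto. auto.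
  -
    intros c p b v G L N G1 L1 Hc IH Hf lp Hs HN. srcinv Hs.
    split; [|split; [left; auto| split; discriminate]].
    eapply steps_app. apply base_steps. apply ss_for.
    eapply steps_app. apply (steps_ctx (CBrk (CIf EHole _))). apply IH; auto.
    eapply steps_app. apply (ctx_step (CBrk CHole)). simpl. apply ss_if_false; auto.
    apply base_steps. constructor.
  -
    intros c p b v G L N G1 L1 M1 G2 L2 M2 Hc IH Ht Hb IHb HM lp Hs HN. srcinv Hs.
    assert (Hsb : src_stmt true (Block b)) by (constructor; assumption).
    destruct (IHb true Hsb HN) as [Hst [Hr Hbc]].
    assert (HL1 := bs_exp_L _ _ _ _ _ _ _ _ Hc). subst L1.
    assert (Hres : restrict L2 L = L2) by (apply restrict_sub; eapply bs_block_dom; eauto).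
    split; [| destruct HM as [[-> ->]|[-> ->]]; split; unfold stmt_res, noBC; auto; split; discriminate].
    eapply steps_app. apply base_steps. apply ss_for.
    eapply steps_app. apply (steps_ctx (CBrk (CIf EHole _))). apply IH; auto.
    eapply steps_app. apply (ctx_step (CBrk CHole)). simpl. apply ss_if_true; auto.
    eapply steps_app. apply loop_enter.
    eapply steps_app. apply (steps_ctx (CBrk (CScoped (CCnt CHole) _ N L))). apply Hst.
    destruct HM as [[-> ->]|[-> ->]].
    + eapply steps_app. apply (ctx_step (CBrk (CScoped CHole _ N L))). apply ss_cnt_leave.
      eapply steps_app. apply (ctx_step (CBrk CHole)). apply ss_scoped_irreg; auto.
      simpl. rewrite Hres. apply base_steps. constructor.
    + eapply steps_app. apply (ctx_step (CBrk (CScoped CHole _ N L))). apply ss_cnt_break.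
      eapply steps_app. apply (ctx_step (CBrk CHole)). apply ss_scoped_irreg; auto.
      simpl. rewrite Hres. apply base_steps. constructor.
  -
    intros c p b v G L N G1 L1 M' G2 L2 G3 L3 Hc IH Ht Hb IHb HM Hp IHp lp Hs HN. srcinv Hs.
    assert (Hsb : src_stmt true (Block b)) by (constructor; assumption).
    destruct (IHb true Hsb HN) as [Hst [Hr Hbc]].
    assert (Hsp : src_stmt false (Block p)) by (constructor; assumption).
    destruct (IHp false Hsp HN) as [Hstp _].
    assert (HL1 := bs_exp_L _ _ _ _ _ _ _ _ Hc). subst L1.
    assert (Hres : restrict L3 L = L3).
    { apply restrict_sub; intros. eapply bs_block_dom; eauto. eapply bs_block_dom; eauto. }
    split; [| split; unfold stmt_res, noBC; auto; split; discriminate].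
    eapply steps_app. apply base_steps. apply ss_for.
    eapply steps_app. apply (steps_ctx (CBrk (CIf EHole _))). apply IH; auto.
    eapply steps_app. apply (ctx_step (CBrk CHole)). simpl. apply ss_if_true; auto.
    eapply steps_app. apply loop_enter.
    eapply steps_app. apply (steps_ctx (CBrk (CScoped (CCnt CHole) _ N L))). apply Hst.
    eapply steps_app. apply (ctx_step (CBrk (CScoped CHole _ N L))).
    destruct HM as [-> | ->]; [apply ss_cnt_reg | apply ss_cnt_continue].
    eapply steps_app. apply (ctx_step (CBrk CHole)). apply ss_scoped_reg.
    eapply steps_app. apply (steps_ctx (CBrk (CScoped CHole _ N L))). apply Hstp.
    eapply steps_app. apply (ctx_step (CBrk CHole)). apply ss_scoped_irreg; auto.
    simpl. rewrite Hres. apply base_steps. constructor.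
  -
    intros c p b v G L N G1 L1 M' G2 L2 G3 L3 M G4 L4 Hc IH Ht Hb IHb HM Hp IHp Hf IHf lp Hs HN.
    srcinv Hs.
    assert (Hsb : src_stmt true (Block b)) by (constructor; assumption).
    destruct (IHb true Hsb HN) as [Hst [Hr Hbc]].
    assert (Hsp : src_stmt false (Block p)) by (constructor; assumption).
    destruct (IHp false Hsp HN) as [Hstp _].
    assert (Hsf : src_stmt false (For [] c p b)) by (apply src_for; auto).
    destruct (IHf false Hsf HN) as [Hstf [Hrf Hbcf]].
    assert (HL1 := bs_exp_L _ _ _ _ _ _ _ _ Hc). subst L1.
    assert (Hres : restrict L4 L = L4).
    { apply restrict_sub; intros. eapply bs_for_dom; eauto.
      eapply bs_block_dom; eauto. eapply bs_block_dom; eauto. }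
    destruct (stmt_noBC _ Hrf (Hbcf eq_refl)) as [-> | ->];
    (split; [| split; unfold stmt_res, noBC; auto; split; discriminate]);
    (eapply steps_app; [apply base_steps; apply ss_for|]);
    (eapply steps_app; [apply (steps_ctx (CBrk (CIf EHole _))); apply IH; auto|]);
    (eapply steps_app; [apply (ctx_step (CBrk CHole)); simpl; apply ss_if_true; auto|]);
    (eapply steps_app; [apply loop_enter|]);
    (eapply steps_app; [apply (steps_ctx (CBrk (CScoped (CCnt CHole) _ N L))); apply Hst|]);
    (eapply steps_app; [apply (ctx_step (CBrk (CScoped CHole _ N L)));
       destruct HM as [-> | ->]; [apply ss_cnt_reg | apply ss_cnt_continue]|]);
    (eapply steps_app; [apply (ctx_step (CBrk CHole)); apply ss_scoped_reg|]);
    (eapply steps_app; [apply (steps_ctx (CBrk (CScoped CHole _ N L))); apply Hstp|]);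
    (eapply steps_app; [apply (ctx_step (CBrk CHole)); apply ss_scoped_reg|]);
    (eapply steps_app; [apply (steps_ctx (CBrk (CScoped CHole _ N L))); apply Hstf|]).
    + eapply steps_app. apply (ctx_step (CBrk CHole)). apply ss_scoped_last.
      simpl. rewrite Hres. apply base_steps. constructor.
    + eapply steps_app. apply (ctx_step (CBrk CHole)). apply ss_scoped_irreg; auto.
      simpl. rewrite Hres. apply base_steps. constructor.
  -
    intros G L N lp _ _. split; [left; auto|]. split; [split; discriminate|]. intro H; congruence.
  -
    intros s ss G L N G1 L1 M G2 L2 Hs IHs Hss IHss lp Hsrc HN.
    inversion Hsrc; subst.
    match goal with h : src_stmt _ s |- _ => destruct (IHs lp h HN) as [Hst _] end.
    match goal with h : Forall _ ss |- _ => destruct (IHss lp h HN) as [Hr [Hbc Hstss]] end.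
    split; auto. split; auto. intros _ N0 L0.
    eapply steps_app. apply (steps_ctx (CScoped CHole ss N0 L0)). apply Hst.
    destruct ss as [|s' ss'].
    + inversion Hss; subst. simpl. apply base_steps. constructor.
    + simpl. eapply steps_app. apply base_steps. constructor. apply Hstss. discriminate.
  -
    intros s ss G L N m G1 L1 Hm Hs IHs lp Hsrc HN.
    inversion Hsrc; subst.
    match goal with h : src_stmt _ s |- _ => destruct (IHs lp h HN) as [Hst [Hr Hbc]] end.
    split; auto. split; auto. intros _ N0 L0.
    eapply steps_app. apply (steps_ctx (CScoped CHole ss N0 L0)). apply Hst.
    simpl. apply base_steps. constructor; auto.
  - intros; constructor.
  - intros. apply base_steps. constructor; auto.
  -
    intros f args vs G L N Gn Ln ys zs Sb M G'' L' rs Hargs IHargs HNf Hlen Hnd HSb IHSb HF Hsrc HN.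
    inversion Hsrc; subst.
    match goal with h : Forall _ args |- _ => destruct (IHargs h HN []) as [Hf _] end. specialize (Hf f). rewrite !app_nil_r in Hf.
    destruct (HN _ _ _ _ HNf) as [b0 [-> Hb0]].
    destruct (IHSb false (src_block _ _ Hb0) HN) as [Hst [Hr Hbc]].
    eapply steps_app. apply Hf.
    eapply steps_app. apply base_steps. apply ss_funcall; eauto.
    eapply steps_app. apply (steps_ctx (CExp (EFrame zs Ln CHole))). apply Hst.
    apply base_steps. simpl. constructor; auto. apply stmt_noBC; auto.
  -
    intros op args vs G L N Gn Ln rs G'' Hargs IHargs Hop Hsrc HN.
    inversion Hsrc; subst.
    match goal with h : Forall _ args |- _ => destruct (IHargs h HN []) as [_ Hf] end. specialize (Hf op). rewrite !app_nil_r in Hf.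
    eapply steps_app. apply Hf.
    apply base_steps. apply ss_opc_vals; auto.
  -
    intros G L N _ _ ws. split; intros; constructor.
  -
    intros Ms M v vs G L N G1 L1 G2 L2 HM IHM HMs IHMs Hsrc HN ws.
    apply Forall_app in Hsrc. destruct Hsrc as [HsMs HsM]. inversion HsM; subst.
    destruct (IHMs HsMs HN (v :: ws)) as [Hf Ho].
    rewrite <- !app_assoc. simpl. split; intros.
    + eapply steps_app. apply (steps_ctx (CExp (EFCall f Ms EHole ws))). apply IHM; auto.
      apply Hf.
    + eapply steps_app. apply (steps_ctx (CExp (EOCall op Ms EHole ws))). apply IHM; auto.
      apply Ho.
Qed.


Inductive layer : Type :=
| KScoped (rest : list (@term D)) (N : @nspace D) (L : @lstate D)
| KLet (xs : list (ident D)) | KAssign (xs : list (ident D)) | KCnt | KBrk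
| KIf (b : list (@term D)) | KSwitch (cs : list (val D * list (@term D))) (d : list (@term D))
| KFCall (f : ident D) (Ms : list (@term D)) (vs : list (val D))
| KOCall (op : opcode D) (Ms : list (@term D)) (vs : list (val D))
| KFrame (zs : list (ident D)) (L : @lstate D).

Definition plug1 (K : layer) (t : @term D) : @term D :=
  match K with
  | KScoped rest N L => Scoped (t :: rest) N L
  | KLet xs => Let xs t
  | KAssign xs => Assign xs t
  | KCnt => Cnt t
  | KBrk => Brk t
  | KIf b => If t b
  | KSwitch cs d => Switch t cs d
  | KFCall f Ms vs => FCall f (Ms ++ t :: map lit vs)
  | KOCall op Ms vs => OCall op (Ms ++ t :: map lit vs)
  | KFrame zs L => Frame zs L t
  end.

Definition plugK (Ks : list layer) (t : @term D) : @term D := fold_right plug1 t Ks.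

Fixpoint cl (E : @ctx D) : list layer :=
  match E with
  | CHole => []
  | CScoped E rest N L => KScoped rest N L :: cl E
  | CLet xs E => KLet xs :: cl E
  | CAssign xs E => KAssign xs :: cl E
  | CExp E => el E
  | CCnt E => KCnt :: cl E
  | CBrk E => KBrk :: cl E
  | CIf E b => KIf b :: el E
  | CSwitch E cs d => KSwitch cs d :: el E
  end
with el (E : @ectx D) : list layer :=
  match E with
  | EHole => []
  | EFCall f Ms E vs => KFCall f Ms vs :: el E
  | EOCall op Ms E vs => KOCall op Ms vs :: el E
  | EFrame zs L E => KFrame zs L :: cl E
  end.

Scheme ctx_mut := Induction for ctx Sort Prop with ectx_mut := Induction for ectx Sort Prop.

Lemma plug_layers : forall E t, plug E t = plugK (cl E) t.
Proof.
  intros E t. apply (ctx_mut D (fun E => plug E t = plugK (cl E) t) (fun E => eplug E t = plugK (el E) t));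
  intros; simpl; try rewrite H; auto.
Qed.

Inductive ev : nat -> @term D -> genv D -> lstate -> nspace -> term -> genv D -> lstate -> nspace -> Prop :=
| ev_fin n t G L N : final t -> ev n t G L N t G L N
| ev_base n t G L N t1 G1 L1 N1 r G' L' N' :
    base_step (t,G,L,N) (t1,G1,L1,N1) -> ev n t1 G1 L1 N1 r G' L' N' -> ev (S n) t G L N r G' L' N'
| ev_ctx n K h G L N r1 G1 L1 N1 r G' L' N' :
    nonfinal h -> ev n h G L N r1 G1 L1 N1 -> ev n (plug1 K r1) G1 L1 N1 r G' L' N' ->
    ev (S n) (plug1 K h) G L N r G' L' N'.

Lemma ev_mono n t G L N r G' L' N' : ev n t G L N r G' L' N' -> forall m, n <= m -> ev m t G L N r G' L' N'.
Proof.
  induction 1; intros m Hm.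
  - constructor; auto.
  - destruct m; [lia|]. econstructor; eauto. apply IHev; lia.
  - destruct m; [lia|]. eapply ev_ctx; eauto. apply IHev1; lia. apply IHev2; lia.
Qed.

Lemma ev_res n t G L N r G' L' N' : ev n t G L N r G' L' N' -> final r.
Proof. induction 1; auto. Qed.

Lemma plug1_nonfinal K t : nonfinal (plug1 K t).
Proof. intros [[vs H]|[m [H _]]]; destruct K; discriminate. Qed.

Lemma plugK_nonfinal Ks t : nonfinal t -> nonfinal (plugK Ks t).
Proof. destruct Ks; simpl; auto. intros; apply plug1_nonfinal. Qed.

Lemma lit_nonfinal t : nonfinal t -> forall v, t <> lit v.
Proof. intros H v E; apply H; subst; left; eexists; reflexivity. Qed.

Lemma map_lit_split : forall (u1 u2 : list (val D)) a r1 b r2,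
  map lit u1 ++ a :: r1 = map lit u2 ++ b :: r2 -> (forall v, a <> lit v) ->
  (u1 = u2 /\ a = b /\ r1 = r2) \/ (exists v, b = lit v).
Proof.
  induction u1; intros u2 a0 r1 b r2 H Ha; destruct u2; simpl in H; inversion H; subst.
  - left; auto.
  - exfalso; eapply Ha; eauto.
  - right; eauto.
  - destruct (IHu1 _ _ _ _ _ H2 Ha) as [[-> [-> ->]]|Hr]; auto.
Qed.

Lemma split_lit (l1 l2 : list (@term D)) a b (w1 w2 : list (val D)) :
  l1 ++ a :: map lit w1 = l2 ++ b :: map lit w2 -> (forall v, a <> lit v) ->
  (l1 = l2 /\ a = b /\ w1 = w2) \/ (exists v, b = lit v).
Proof.
  intros H Ha. apply (f_equal (@rev _)) in H. rewrite !rev_app_distr in H. simpl in H.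
  rewrite <- !app_assoc in H. simpl in H. rewrite <- !map_rev in H.
  destruct (map_lit_split _ _ _ _ _ _ H Ha) as [[H1 [H2 H3]]|Hr]; auto.
  left. split; [|split; auto].
  - rewrite <- (rev_involutive l1), <- (rev_involutive l2), H3; auto.
  - rewrite <- (rev_involutive w1), <- (rev_involutive w2), H1; auto.
Qed.

Lemma plug1_inj K K' h h' : plug1 K h = plug1 K' h' -> nonfinal h -> nonfinal h' -> K = K' /\ h = h'.
Proof.
  intros E Hh Hh'. destruct K, K'; simpl in E; inversion E; subst; auto.
  - destruct (split_lit _ _ _ _ _ _ H1 (lit_nonfinal _ Hh)) as [[-> [-> ->]]|[v ->]]; auto.
    exfalso; apply Hh'; left; eexists; reflexivity.
  - destruct (split_lit _ _ _ _ _ _ H1 (lit_nonfinal _ Hh)) as [[-> [-> ->]]|[v ->]]; auto.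
    exfalso; apply Hh'; left; eexists; reflexivity.
Qed.

Lemma in_map_lit (h : @term D) ws : In h (map lit ws) -> final h.
Proof. intro H; apply in_map_iff in H; destruct H as [w [<- _]]; left; eexists; reflexivity. Qed.

Lemma base_plug1 K h G L N c : base_step (plug1 K h, G, L, N) c -> final h.
Proof.
  destruct K; simpl; intro H; inversion H; subst;
  try solve [left; eexists; reflexivity | right; eexists; split; eauto; tauto];
  try (apply (in_map_lit h vs0); match goal with e : map lit _ = _ |- _ => rewrite e end;
       apply in_or_app; right; left; auto).
  all: match goal with h : _ = regular \/ _ |- _ => destruct h as [-> | ->] end;
    [left; eexists; reflexivity | right; eexists; split; eauto].
Qed.

Lemma base_final t G L N c : final t -> ~ base_step (t, G, L, N) c.
Proof. intros [[vs ->]|[m [-> _]]] H; inversion H. Qed.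

Lemma ev_final_inv n t G L N r G' L' N' : ev n t G L N r G' L' N' -> final t ->
  r = t /\ G' = G /\ L' = L /\ N' = N.
Proof.
  destruct 1; intro Hf; auto.
  - exfalso; eapply base_final; eauto.
  - exfalso; eapply plug1_nonfinal; eauto.
Qed.

Lemma ev_inv n t G L N r G' L' N' : ev n t G L N r G' L' N' ->
  (final t /\ r = t /\ G' = G /\ L' = L /\ N' = N) \/
  (exists n' t1 G1 L1 N1, n = S n' /\ base_step (t,G,L,N) (t1,G1,L1,N1) /\ ev n' t1 G1 L1 N1 r G' L' N') \/
  (exists n' K h r1 G1 L1 N1, n = S n' /\ t = plug1 K h /\ nonfinal h /\ ev n' h G L N r1 G1 L1 N1 /\
     ev n' (plug1 K r1) G1 L1 N1 r G' L' N').
Proof. destruct 1. left; auto. right; left; do 5 eexists; eauto. right; right; do 7 eexists; eauto. Qed.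

Lemma classic_final (t : @term D) : final t \/ nonfinal t.
Proof.
  destruct t; try (right; intros [[vs H]|[m [H _]]]; discriminate).
  - left; left; eauto.
  - destruct m; try (left; right; eexists; split; eauto; tauto).
    right; intros [[vs H]|[m [H Hm]]]; inversion H; subst; intuition discriminate.
Qed.

Lemma layer_expand K t t' G L N G1 L1 N1 : nonfinal t ->
  (forall n r G' L' N', ev n t' G1 L1 N1 r G' L' N' -> exists m, ev m t G L N r G' L' N') ->
  forall n r G' L' N', ev n (plug1 K t') G1 L1 N1 r G' L' N' -> exists m, ev m (plug1 K t) G L N r G' L' N'.
Proof.
  intros Hnf IH n r G' L' N' H.
  destruct (classic_final t') as [Hf | Hnf'].
  - destruct (IH 0 t' G1 L1 N1 (ev_fin 0 t' G1 L1 N1 Hf)) as [m Hm].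
    exists (S (max m n)). eapply ev_ctx; eauto; eapply ev_mono; eauto; lia.
  - destruct (ev_inv _ _ _ _ _ _ _ _ _ H) as [[Hf _]|[[n' [t1 [G2 [L2 [N2 [_ [Hb _]]]]]]]|[n' [K' [h [r1 [G2 [L2 [N2 [-> [E [Hh [H1 H2]]]]]]]]]]]]].
    + exfalso; eapply plug1_nonfinal; eauto.
    + exfalso; apply Hnf'; eapply base_plug1; eauto.
    + destruct (plug1_inj _ _ _ _ E Hnf' Hh) as [-> ->].
      destruct (IH _ _ _ _ _ H1) as [m Hm].
      exists (S (max m n')). eapply ev_ctx; eauto; eapply ev_mono; eauto; lia.
Qed.

Lemma plugK_expand Ks t t' G L N G1 L1 N1 : nonfinal t ->
  (forall n r G' L' N', ev n t' G1 L1 N1 r G' L' N' -> exists m, ev m t G L N r G' L' N') ->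
  forall n r G' L' N', ev n (plugK Ks t') G1 L1 N1 r G' L' N' -> exists m, ev m (plugK Ks t) G L N r G' L' N'.
Proof.
  intros Hnf IH. induction Ks as [|K Ks IHK]; simpl; auto.
  intros. eapply layer_expand; [apply plugK_nonfinal; auto | | eauto]. exact IHK.
Qed.

Lemma step_nonfinal c c' : @step D c c' -> forall t G L N, c = (t,G,L,N) -> nonfinal t.
Proof.
  induction 1; intros t0 G0 L0 N0 Ec.
  - subst. intro Hf. destruct c' as [[[? ?] ?] ?]. eapply base_final; eauto.
  - inversion Ec; subst. rewrite plug_layers. apply plugK_nonfinal. eapply IHstep; eauto.
  - inversion Ec; subst. rewrite plug_layers. apply plugK_nonfinal.
    intros [[vs H]|[m [H Hm]]]; inversion H; subst; intuition discriminate.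
Qed.

Lemma ev_ext_false n e G L N r G' L' N' : ev n (Mode (MExt e)) G L N r G' L' N' -> False.
Proof.
  intro H. destruct (ev_inv _ _ _ _ _ _ _ _ _ H) as [[Hf _]|[[n' [t1 [G2 [L2 [N2 [_ [Hb _]]]]]]]|[n' [K' [h [r1 [G2 [L2 [N2 [_ [E _]]]]]]]]]]].
  - destruct Hf as [[vs Hv]|[m [Hm Hm']]]; [discriminate|]. inversion Hm; subst. intuition discriminate.
  - inversion Hb.
  - destruct K'; discriminate.
Qed.

Lemma step_expand c c' : @step D c c' -> forall t G L N t' G1 L1 N1, c = (t,G,L,N) -> c' = (t',G1,L1,N1) ->
  forall n r G' L' N', ev n t' G1 L1 N1 r G' L' N' -> exists m, ev m t G L N r G' L' N'.
Proof.
  induction 1; intros t0 G0 L0 N0 t0' G2 L2 N2 Ec Ec'; subst.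
  - intros. exists (S n). eapply ev_base; eauto.
  - inversion Ec; inversion Ec'; subst. rewrite !plug_layers.
    apply plugK_expand. eapply step_nonfinal; eauto. intros; eapply IHstep; eauto.
  - inversion Ec'; subst. intros. exfalso; eapply ev_ext_false; eauto.
Qed.

Lemma steps_ev c c' : @steps D c c' -> forall t G L N r G' L' N', c = (t,G,L,N) -> c' = (r,G',L',N') ->
  final r -> exists n, ev n t G L N r G' L' N'.
Proof.
  induction 1; intros t0 G0 L0 N0 r G' L' N' E E' Hf; subst.
  - inversion E'; subst. exists 0; constructor; auto.
  - destruct c2 as [[[t2 G2] L2] N2].
    destruct (IHsteps _ _ _ _ _ _ _ _ eq_refl eq_refl Hf) as [n Hn].
    eapply step_expand; eauto.
Qed.

Lemma bs_props S G L N M G' L' N' lp : @bs D S G L N M G' L' N' -> src_stmt lp S -> src_nspace N ->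
  stmt_res M /\ (lp = false -> noBC M).
Proof. intros H Hs HN. destruct (bs_to_steps_all _ _ _ _ _ _ _ _ H lp Hs HN) as [_ [? ?]]; auto. Qed.

Definition simpleK (K : layer) : Prop :=
  match K with KFCall _ _ _ | KOCall _ _ _ => False | _ => True end.

Lemma plug1_inj_simple K K' h x : plug1 K' h = plug1 K x -> simpleK K -> K' = K /\ h = x.
Proof. intros E Hs; destruct K, K'; simpl in *; inversion E; subst; tauto. Qed.

Lemma L_ctx n K h G L N r G' L' N' : nonfinal h -> ev n (plug1 K h) G L N r G' L' N' ->
  exists n' r1 G1 L1 N1, n' < n /\ ev n' h G L N r1 G1 L1 N1 /\ ev n' (plug1 K r1) G1 L1 N1 r G' L' N'.
Proof.
  intros Hnf H.
  destruct (ev_inv _ _ _ _ _ _ _ _ _ H) as [[Hf _]|[[n' [t1 [G2 [L2 [N2 [_ [Hb _]]]]]]]|[n' [K' [h' [r1 [G2 [L2 [N2 [-> [E [Hh [H1 H2]]]]]]]]]]]]].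
  - exfalso; eapply plug1_nonfinal; eauto.
  - exfalso; apply Hnf; eapply base_plug1; eauto.
  - destruct (plug1_inj _ _ _ _ E Hnf Hh) as [-> ->]. exists n', r1, G2, L2, N2. split; auto.
Qed.

Lemma L_hole n K x G L N r G' L' N' : simpleK K -> final x -> ev n (plug1 K x) G L N r G' L' N' ->
  exists n' t1 G1 L1 N1, n' < n /\ base_step (plug1 K x, G, L, N) (t1,G1,L1,N1) /\ ev n' t1 G1 L1 N1 r G' L' N'.
Proof.
  intros Hs Hfx H.
  destruct (ev_inv _ _ _ _ _ _ _ _ _ H) as [[Hf _]|[[n' [t1 [G2 [L2 [N2 [-> [Hb Hc]]]]]]]|[n' [K' [h' [r1 [G2 [L2 [N2 [-> [E [Hh [H1 H2]]]]]]]]]]]]].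
  - exfalso; eapply plug1_nonfinal; eauto.
  - exists n', t1, G2, L2, N2; auto.
  - symmetry in E. destruct (plug1_inj_simple _ _ _ _ E Hs) as [-> ->]. contradiction.
Qed.

Lemma L_noctx n t G L N r G' L' N' : nonfinal t -> (forall K h, t <> plug1 K h) -> ev n t G L N r G' L' N' ->
  exists n' t1 G1 L1 N1, n' < n /\ base_step (t, G, L, N) (t1,G1,L1,N1) /\ ev n' t1 G1 L1 N1 r G' L' N'.
Proof.
  intros Hnf Hk H.
  destruct (ev_inv _ _ _ _ _ _ _ _ _ H) as [[Hf _]|[[n' [t1 [G2 [L2 [N2 [-> [Hb Hc]]]]]]]|[n' [K' [h' [r1 [G2 [L2 [N2 [-> [E [Hh [H1 H2]]]]]]]]]]]]].
  - contradiction.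
  - exists n', t1, G2, L2, N2; auto.
  - exfalso; eapply Hk; eauto.
Qed.

Lemma fin_reg : final (@regular D). Proof. left; eexists; reflexivity. Qed.
Lemma fin_mode m : m = MBreak \/ m = MContinue \/ m = MLeave -> final (@Mode D m).
Proof. intros; right; eauto. Qed.
Lemma fin_tup (vs : list (val D)) : final (Tup vs). Proof. left; eauto. Qed.
Lemma fin_lit (v : val D) : final (lit v). Proof. left; exists [v]; reflexivity. Qed.
Hint Resolve fin_reg fin_mode fin_tup fin_lit : core.

Ltac finv H := let h := fresh in pose proof (ev_final_inv _ _ _ _ _ _ _ _ _ H ltac:(auto)) as h;
  destruct h as [? [? [? ?]]]; subst.

Lemma L_cnt n x G L N r G' L' N' : final x -> ev n (Cnt x) G L N r G' L' N' ->
  G' = G /\ L' = L /\ N' = N /\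
  ((x = regular /\ r = regular) \/ (x = Mode MContinue /\ r = regular) \/
   (x = Mode MBreak /\ r = Mode MBreak) \/ (x = Mode MLeave /\ r = Mode MLeave)).
Proof.
  intros Hf H. destruct (L_hole _ KCnt _ _ _ _ _ _ _ _ I Hf H) as [n' [t1 [G1 [L1 [N1 [_ [Hb Hc]]]]]]].
  simpl in Hb; inversion Hb; subst; finv Hc; intuition.
Qed.

Lemma L_brk n x G L N r G' L' N' : final x -> ev n (Brk x) G L N r G' L' N' ->
  G' = G /\ L' = L /\ N' = N /\
  ((x = regular /\ r = regular) \/ (x = Mode MBreak /\ r = regular) \/ (x = Mode MLeave /\ r = Mode MLeave)).
Proof.
  intros Hf H. destruct (L_hole _ KBrk _ _ _ _ _ _ _ _ I Hf H) as [n' [t1 [G1 [L1 [N1 [_ [Hb Hc]]]]]]].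
  simpl in Hb; inversion Hb; subst; finv Hc; intuition.
Qed.

Lemma L_scoped_final n x rest N0 L0 G L N r G' L' N' : final x -> ev n (Scoped (x :: rest) N0 L0) G L N r G' L' N' ->
  (x = regular /\ rest <> [] /\ exists n', n' < n /\ ev n' (Scoped rest N0 L0) G L N r G' L' N') \/
  (x = regular /\ rest = [] /\ r = regular /\ G' = G /\ L' = restrict L L0 /\ N' = N0) \/
  (exists m, x = Mode m /\ (m = MBreak \/ m = MContinue \/ m = MLeave) /\ r = Mode m /\ G' = G /\ L' = restrict L L0 /\ N' = N0).
Proof.
  intros Hf H. destruct (L_hole _ (KScoped rest N0 L0) _ _ _ _ _ _ _ _ I Hf H) as [n' [t1 [G1 [L1 [N1 [Hn [Hb Hc]]]]]]].
  simpl in Hb; inversion Hb; subst.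
  - left. split; auto. split; [discriminate|]. exists n'. split; [lia | auto].
  - finv Hc. right; left; repeat split; auto.
  - finv Hc. right; right. eexists; repeat split; eauto.
Qed.

Definition ME n := forall e G L N r G' L' N', src_expr e -> src_nspace N -> ev n e G L N r G' L' N' ->
  exists vs, r = Tup vs /\ @bs_exp D e G L N vs G' L' N'.
Definition MS n := forall lp S G L N r G' L' N', src_stmt lp S -> src_nspace N -> stmt_res r ->
  ev n S G L N r G' L' N' -> @bs D S G L N r G' L' N'.

Lemma ev_scoped : forall ss lp, Forall (src_stmt lp) ss -> forall n, (forall m, m < n -> MS m) ->
  forall N0 L0 G L N r G' L' N', src_nspace N -> ev n (Scoped ss N0 L0) G L N r G' L' N' ->
  exists L2, bs_seq ss G L N r G' L2 N /\ L' = restrict L2 L0 /\ N' = N0.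
Proof.
  induction ss as [|s ss IH]; intros lp Hss n IHn N0 L0 G L N r G' L' N' HN H.
  - destruct (ev_inv _ _ _ _ _ _ _ _ _ H) as [[Hf _]|[[n' [t1 [G2 [L2 [N2 [_ [Hb _]]]]]]]|[n' [K' [h' [r1 [G2 [L2 [N2 [_ [E _]]]]]]]]]]].
    + destruct Hf as [[? Hf]|[? [Hf _]]]; discriminate.
    + inversion Hb.
    + destruct K'; discriminate.
  - inversion Hss; subst. rename H2 into Hs, H3 into Hss'.
    destruct (classic_final s) as [Hf | Hnf].
    + destruct (L_scoped_final _ _ _ _ _ _ _ _ _ _ _ _ Hf H) as [[-> _]|[[-> _]|[m [-> [Hm [-> [-> [-> ->]]]]]]]].
      * inversion Hs; subst. inversion H0.
      * inversion Hs; subst. inversion H0.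
      * exists L. split; auto. apply bs_seq_irreg; auto. constructor; auto.
    + destruct (L_ctx _ (KScoped ss N0 L0) _ _ _ _ _ _ _ _ Hnf H) as [n' [r1 [G1 [L1 [N1 [Hn [H1 H2]]]]]]].
      simpl in H2.
      destruct (L_scoped_final _ _ _ _ _ _ _ _ _ _ _ _ (ev_res _ _ _ _ _ _ _ _ _ H1) H2)
        as [[-> [Hne [n'' [Hn'' H3]]]]|[[-> [-> [-> [-> [-> ->]]]]]|[m [-> [Hm [-> [-> [-> ->]]]]]]]].
      * assert (Hb : bs s G L N regular G1 L1 N1) by (eapply IHn; eauto; left; auto).
        assert (N1 = N) by (eapply bs_N; eauto). subst N1.
        destruct (IH lp Hss' n'' ltac:(intros; apply IHn; lia) N0 L0 _ _ _ _ _ _ _ HN H3) as [L2 [Hseq [-> ->]]].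
        exists L2. split; auto. econstructor; eauto.
      * assert (Hb : bs s G L N regular G1 L1 N1) by (eapply IHn; eauto; left; auto).
        assert (N1 = N) by (eapply bs_N; eauto). subst N1.
        exists L1. split; auto. econstructor; eauto. constructor.
      * assert (Hb : bs s G L N (Mode m) G1 L1 N1) by (eapply IHn; eauto; unfold stmt_res; intuition (subst; auto)).
        assert (N1 = N) by (eapply bs_N; eauto). subst N1.
        exists L1. split; auto. apply bs_seq_irreg; auto.
Qed.

Definition hdc (k : ident D + opcode D) (args : list (@term D)) : @term D :=
  match k with inl f => FCall f args | inr op => OCall op args end.
Definition KF (k : ident D + opcode D) Ms ws : layer :=
  match k with inl f => KFCall f Ms ws | inr op => KOCall op Ms ws end.
Lemma plug1_KF k Ms ws h : plug1 (KF k Ms ws) h = hdc k (Ms ++ h :: map lit ws).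
Proof. destruct k; reflexivity. Qed.

Lemma in_map_lit' (h : @term D) ws : In h (map lit ws) -> exists w, h = lit w.
Proof. intro H; apply in_map_iff in H; destruct H as [w [<- _]]; eauto. Qed.

Lemma map_lit_inj (a b : list (val D)) : map lit a = map lit b -> a = b.
Proof. revert b; induction a; destruct b; simpl; intro H; inversion H; auto. f_equal; auto. Qed.

Lemma ev_call_lit k n A x ws G L N r G' L' N' : final x ->
  ev n (hdc k (A ++ x :: map lit ws)) G L N r G' L' N' -> exists v, x = lit v.
Proof.
  intros Hf H.
  destruct (ev_inv _ _ _ _ _ _ _ _ _ H) as [[Hf' _]|[[n' [t1 [G2 [L2 [N2 [_ [Hb _]]]]]]]|[n' [K' [h' [r1 [G2 [L2 [N2 [_ [E [Hh _]]]]]]]]]]]].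
  - destruct k; destruct Hf' as [[? Hf']|[? [Hf' _]]]; discriminate.
  - destruct k; simpl in Hb; inversion Hb; subst;
    eapply in_map_lit'; match goal with e : map lit _ = _ |- _ => rewrite e end;
    apply in_or_app; right; left; auto.
  - destruct k, K'; simpl in E; try discriminate; inversion E; subst;
    match goal with e : _ = _ ++ h' :: _ |- _ => symmetry in e;
    (destruct (split_lit _ _ _ _ _ _ e (lit_nonfinal _ Hh)) as [[_ [-> _]]|Hl]; [contradiction|exact Hl]) end.
Qed.

Lemma ev_args k : forall args, Forall src_expr args -> forall n, (forall m, m < n -> ME m) ->
  forall ws G L N r G' L' N', src_nspace N -> ev n (hdc k (args ++ map lit ws)) G L N r G' L' N' ->
  exists vs G1 L1 m, bs_args args G L N vs G1 L1 N /\ m <= n /\ ev m (hdc k (map lit (vs ++ ws))) G1 L1 N r G' L' N'.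
Proof.
  induction args as [|e Ms IH] using rev_ind; intros Hs n IHn ws G L N r G' L' N' HN H.
  - exists [], G, L, n. split; [constructor|]. split; auto.
  - apply Forall_app in Hs. destruct Hs as [HMs He]. inversion He; subst. clear He. rename H2 into He.
    rewrite <- app_assoc in H. simpl in H.
    destruct (classic_final e) as [Hf|Hnf].
    + destruct He; try (exfalso; destruct Hf as [[? Hf]|[? [Hf _]]]; discriminate).
      change (Ms ++ Tup [v] :: map lit ws) with (Ms ++ map lit (v :: ws)) in H.
      destruct (IH HMs n IHn (v :: ws) _ _ _ _ _ _ _ HN H) as [vs [G1 [L1 [m [Ha [Hm Hc]]]]]].
      exists (vs ++ [v]), G1, L1, m. split; [|split; auto].
      * eapply bs_args_snoc; eauto. constructor.
      * rewrite <- app_assoc. exact Hc.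
    + rewrite <- plug1_KF in H.
      destruct (L_ctx _ _ _ _ _ _ _ _ _ _ Hnf H) as [n' [r1 [G1 [L1 [N1 [Hn [H1 H2]]]]]]].
      destruct (IHn n' Hn _ _ _ _ _ _ _ _ He HN H1) as [vs1 [-> Hbe]].
      assert (N1 = N) by (eapply bs_exp_N; eauto). subst N1.
      rewrite plug1_KF in H2.
      destruct (ev_call_lit _ _ _ _ _ _ _ _ _ _ _ _ (fin_tup _) H2) as [v Hv]. inversion Hv; subst.
      change (Ms ++ Tup [v] :: map lit ws) with (Ms ++ map lit (v :: ws)) in H2.
      destruct (IH HMs n' ltac:(intros; apply IHn; lia) (v :: ws) _ _ _ _ _ _ _ HN H2) as [vs [G2 [L2 [m [Ha [Hm Hc]]]]]].
      exists (vs ++ [v]), G2, L2, m. split; [|split; [lia|]].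
      * eapply bs_args_snoc; eauto.
      * rewrite <- app_assoc. exact Hc.
Qed.

Lemma ev_fcall_vals m f vs G L N r G' L' N' : ev m (FCall f (map lit vs)) G L N r G' L' N' ->
  exists ys zs Sb m', N f = Some (ys,zs,Sb) /\ length vs = length ys /\ NoDup (ys ++ zs) /\ m' < m /\
    ev m' (Frame zs L Sb) G (locals_f ys vs zs) N r G' L' N'.
Proof.
  intro H.
  destruct (ev_inv _ _ _ _ _ _ _ _ _ H) as [[Hf' _]|[[n' [t1 [G2 [L2 [N2 [-> [Hb Hc]]]]]]]|[n' [K' [h' [r1 [G2 [L2 [N2 [_ [E [Hh _]]]]]]]]]]]].
  - destruct Hf' as [[? Hf']|[? [Hf' _]]]; discriminate.
  - inversion Hb; subst. match goal with e: map lit _ = map lit _ |- _ => apply map_lit_inj in e end; subst. do 4 eexists; eauto 7.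
  - destruct K'; simpl in E; try discriminate; inversion E; subst.
    exfalso. apply Hh. apply (in_map_lit h' vs).
    match goal with e : _ = _ |- _ => first [rewrite e | rewrite <- e]; apply in_or_app; right; left; auto; fail end.
Qed.

Lemma ev_ocall_vals m op vs G L N r G' L' N' : ev m (OCall op (map lit vs)) G L N r G' L' N' ->
  exists rs, opc_step D G op vs (inl rs) G' /\ r = Tup rs /\ L' = L /\ N' = N.
Proof.
  intro H.
  destruct (ev_inv _ _ _ _ _ _ _ _ _ H) as [[Hf' _]|[[n' [t1 [G2 [L2 [N2 [-> [Hb Hc]]]]]]]|[n' [K' [h' [r1 [G2 [L2 [N2 [_ [E [Hh _]]]]]]]]]]]].
  - destruct Hf' as [[? Hf']|[? [Hf' _]]]; discriminate.
  - inversion Hb; subst; match goal with e: map lit _ = map lit _ |- _ => apply map_lit_inj in e end; subst.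
    + finv Hc. eauto.
    + exfalso; eapply ev_ext_false; eauto.
  - destruct K'; simpl in E; try discriminate; inversion E; subst.
    exfalso. apply Hh. apply (in_map_lit h' vs).
    match goal with e : _ = _ |- _ => first [rewrite e | rewrite <- e]; apply in_or_app; right; left; auto; fail end.
Qed.

Lemma ev_frame m zs L0 h G L N r G' L' N' : nonfinal h -> ev m (Frame zs L0 h) G L N r G' L' N' ->
  exists m' r1 G1 L1 N1 rs, m' < m /\ ev m' h G L N r1 G1 L1 N1 /\ (r1 = regular \/ r1 = Mode MLeave) /\
    Forall2 (fun z r => L1 z = Some r) zs rs /\ r = Tup rs /\ G' = G1 /\ L' = L0 /\ N' = N1.
Proof.
  intros Hnf H.
  destruct (L_ctx _ (KFrame zs L0) _ _ _ _ _ _ _ _ Hnf H) as [n' [r1 [G1 [L1 [N1 [Hn [H1 H2]]]]]]].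
  destruct (L_hole _ (KFrame zs L0) _ _ _ _ _ _ _ _ I (ev_res _ _ _ _ _ _ _ _ _ H1) H2) as [n2 [t1 [G2 [L2 [N2 [_ [Hb Hc]]]]]]].
  simpl in Hb; inversion Hb; subst. finv Hc. do 6 eexists; eauto 10.
Qed.

Lemma ME_step n : (forall m, m < n -> ME m /\ MS m) -> ME n.
Proof.
  intros IH e G L N r G' L' N' He HN H. destruct He.
  - finv H. eexists; split; eauto. constructor.
  - assert (Hnf : nonfinal (Var x)) by (intros [[? Hf]|[? [Hf _]]]; discriminate).
    assert (Hnk : forall K h, Var x <> plug1 K h) by (intros K h; destruct K; discriminate).
    destruct (L_noctx _ _ _ _ _ _ _ _ _ Hnf Hnk H) as [n' [t1 [G1 [L1 [N1 [_ [Hb Hc]]]]]]].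
    inversion Hb; subst. finv Hc. exists [v]; split; [reflexivity|]. apply bs_ident; auto.
  - rewrite <- (app_nil_r args) in H. change (FCall f (args ++ [])) with (hdc (inl f) (args ++ map lit [])) in H.
    destruct (ev_args (inl f) args H0 n ltac:(intros; apply IH; auto) [] _ _ _ _ _ _ _ HN H)
      as [vs [G1 [L1 [m [Ha [Hm Hc]]]]]].
    rewrite app_nil_r in Hc. simpl in Hc.
    destruct (ev_fcall_vals _ _ _ _ _ _ _ _ _ _ Hc) as [ys [zs [Sb [m' [Hf [Hl [Hnd [Hm' Hfr]]]]]]]].
    destruct (HN _ _ _ _ Hf) as [b0 [-> Hb0]].
    assert (Hnf : nonfinal (Block b0)) by (intros [[? Hf']|[? [Hf' _]]]; discriminate).
    destruct (ev_frame _ _ _ _ _ _ _ _ _ _ _ Hnf Hfr)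
      as [m'' [r1 [G2 [L2 [N2 [rs [Hm'' [Hbody [Hr1 [HF [-> [-> [-> ->]]]]]]]]]]]]].
    assert (Hbb : bs (Block b0) G1 (locals_f ys vs zs) N r1 G2 L2 N2).
    { assert (Hm3 : m'' < n) by lia.
      apply (proj2 (IH m'' Hm3) false (Block b0) _ _ _ _ _ _ _ (src_block _ _ Hb0) HN); auto.
      unfold stmt_res; destruct Hr1; auto. }
    assert (N2 = N) by (eapply bs_N; eauto). subst N2.
    exists rs. split; auto. eapply bs_funcall; eauto.
  - rewrite <- (app_nil_r args) in H. change (OCall op (args ++ [])) with (hdc (inr op) (args ++ map lit [])) in H.
    destruct (ev_args (inr op) args H0 n ltac:(intros; apply IH; auto) [] _ _ _ _ _ _ _ HN H)
      as [vs [G1 [L1 [m [Ha [Hm Hc]]]]]].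
    rewrite app_nil_r in Hc. simpl in Hc.
    destruct (ev_ocall_vals _ _ _ _ _ _ _ _ _ _ Hc) as [rs [Ho [-> [-> ->]]]].
    exists rs. split; auto. eapply bs_opccall; eauto.
Qed.

Lemma L_hole_exp n K e G L N r G' L' N' : simpleK K -> src_expr e -> src_nspace N ->
  (forall m, m < n -> ME m) -> ev n (plug1 K e) G L N r G' L' N' ->
  exists vs G1 n' t1 G2 L2 N2, bs_exp e G L N vs G1 L N /\ n' < n /\
    base_step (plug1 K (Tup vs), G1, L, N) (t1, G2, L2, N2) /\ ev n' t1 G2 L2 N2 r G' L' N'.
Proof.
  intros Hs He HN IH H.
  destruct (classic_final e) as [Hf|Hnf].
  - destruct He; try (exfalso; destruct Hf as [[? Hf]|[? [Hf _]]]; discriminate).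
    destruct (L_hole _ _ _ _ _ _ _ _ _ _ Hs Hf H) as [n' [t1 [G1 [L1 [N1 [Hn [Hb Hc]]]]]]].
    exists [v], G, n', t1, G1, L1, N1. split; [constructor|]. auto.
  - destruct (L_ctx _ _ _ _ _ _ _ _ _ _ Hnf H) as [n' [r1 [G1 [L1 [N1 [Hn [H1 H2]]]]]]].
    destruct (IH n' Hn _ _ _ _ _ _ _ _ He HN H1) as [vs [-> Hbe]].
    assert (N1 = N) by (eapply bs_exp_N; eauto). subst N1.
    assert (L1 = L) by (eapply bs_exp_L; eauto). subst L1.
    destruct (L_hole _ _ _ _ _ _ _ _ _ _ Hs (fin_tup _) H2) as [n2 [t1 [G2 [L2 [N2 [Hn2 [Hb Hc]]]]]]].
    exists vs, G1, n2, t1, G2, L2, N2. split; auto. split; [lia|]. auto.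
Qed.

Lemma nf_block (ss : list (@term D)) : nonfinal (Block ss).
Proof. intros [[? Hf]|[? [Hf _]]]; discriminate. Qed.
Lemma nk_block (ss : list (@term D)) : forall K h, Block ss <> plug1 K h.
Proof. intros K h; destruct K; discriminate. Qed.

Lemma ev_block_inv n ss G L N r G' L' N' : ev n (Block ss) G L N r G' L' N' ->
  (ss = [] /\ r = regular /\ G' = G /\ L' = L /\ N' = N) \/
  (ss <> [] /\ disjoint N (funs ss) /\ exists n', n' < n /\ ev n' (Scoped ss N L) G L (dunion N (funs ss)) r G' L' N').
Proof.
  intro H. destruct (L_noctx _ _ _ _ _ _ _ _ _ (nf_block ss) (nk_block ss) H) as [n' [t1 [G1 [L1 [N1 [Hn [Hb Hc]]]]]]].
  inversion Hb; subst.
  - right. split; auto. split; auto. eauto.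
  - finv Hc. left; auto.
Qed.

Lemma ev_loop n (IH : forall m, m < n -> ME m /\ MS m) c p b G L N r G' L' N' :
  src_expr c -> Forall (src_stmt false) p -> Forall (src_stmt true) b -> src_nspace N ->
  ev n (Brk (If c [Cnt (Block b); Block p; For [] c p b])) G L N r G' L' N' ->
  bs (For [] c p b) G L N r G' L' N'.
Proof.
  intros Hc Hp Hb HN H.
  assert (HsB : src_stmt true (Block b)) by (constructor; auto).
  assert (HsP : src_stmt false (Block p)) by (constructor; auto).
  assert (HsF : src_stmt false (For [] c p b)) by (apply src_for; auto).
  assert (Hnf1 : nonfinal (If c [Cnt (Block b); Block p; For [] c p b])) by (intros [[? Hf]|[? [Hf _]]]; discriminate).
  destruct (L_ctx _ KBrk _ _ _ _ _ _ _ _ Hnf1 H) as [n1 [r1 [G1 [L1 [N1 [Hn1 [HI HB]]]]]]].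
  simpl in HB. destruct (L_brk _ _ _ _ _ _ _ _ _ (ev_res _ _ _ _ _ _ _ _ _ HI) HB) as [-> [-> [-> Hbr]]].
  assert (IHE : forall m, m < n1 -> ME m) by (intros; apply IH; lia).
  destruct (L_hole_exp _ (KIf [Cnt (Block b); Block p; For [] c p b]) _ _ _ _ _ _ _ _ I Hc HN IHE HI) as [vs [G2 [n2 [t1 [G3 [L3 [N3 [Hce [Hn2 [Hbs HI2]]]]]]]]]].
  simpl in Hbs; inversion Hbs; subst.
  -
    finv HI2. destruct Hbr as [[_ ->]|[[Hx _]|[Hx _]]]; try discriminate.
    eapply bs_for_false; eauto.
  -
    destruct (ev_block_inv _ _ _ _ _ _ _ _ _ HI2) as [[Hx _]|[_ [_ [n3 [Hn3 HS]]]]]; [discriminate|]. rename N3 into N. rename L3 into L.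
    simpl funs in HS. rewrite dunion_empty in HS.
    assert (Hnfc : nonfinal (Cnt (Block b))) by (intros [[? Hf]|[? [Hf _]]]; discriminate).
    destruct (L_ctx _ (KScoped [Block p; For [] c p b] N L) _ _ _ _ _ _ _ _ Hnfc HS)
      as [n4 [r2 [G4 [L4 [N4 [Hn4 [HC HS2]]]]]]].
    simpl in HS2.
    destruct (L_ctx _ KCnt _ _ _ _ _ _ _ _ (nf_block b) HC) as [n5 [r3 [G5 [L5 [N5 [Hn5 [HB5 HC5]]]]]]].
    simpl in HC5. destruct (L_cnt _ _ _ _ _ _ _ _ _ (ev_res _ _ _ _ _ _ _ _ _ HB5) HC5) as [<- [<- [<- Hcnt]]].
    assert (Hr3 : stmt_res r3) by (unfold stmt_res; intuition (subst; auto)).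
    assert (HbB : bs (Block b) G3 L N r3 G4 L4 N4) by (eapply (proj2 (IH n5 ltac:(lia))); eauto).
    assert (N4 = N) by (eapply bs_N; eauto). subst N4.
    assert (HresB : restrict L4 L = L4) by (apply restrict_sub; eapply bs_block_dom; eauto).
    assert (Hfr2 : final r2) by (destruct Hcnt as [[_ ->]|[[_ ->]|[[_ ->]|[_ ->]]]]; auto).
    destruct (L_scoped_final _ _ _ _ _ _ _ _ _ _ _ _ Hfr2 HS2)
      as [[-> [_ [n6 [Hn6 HS3]]]]|[[_ [Hx _]]|[m [-> [Hm [-> [-> [-> ->]]]]]]]]; [| discriminate |].
    +
      assert (HM' : r3 = regular \/ r3 = Mode MContinue)
        by (destruct Hcnt as [[-> _]|[[-> _]|[[_ Hx]|[_ Hx]]]]; auto; discriminate).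
      destruct (L_ctx _ (KScoped [For [] c p b] N L) _ _ _ _ _ _ _ _ (nf_block p) HS3)
        as [n7 [r4 [G6 [L6 [N6 [Hn7 [HP HS4]]]]]]].
      simpl in HS4.
      destruct (L_scoped_final _ _ _ _ _ _ _ _ _ _ _ _ (ev_res _ _ _ _ _ _ _ _ _ HP) HS4)
        as [[-> [_ [n8 [Hn8 HS5]]]]|[[_ [Hx _]]|[m [-> [Hm [-> [-> [-> ->]]]]]]]]; [| discriminate |].
      * assert (HbP : bs (Block p) G4 L4 N regular G6 L6 N6)
          by (eapply (proj2 (IH n7 ltac:(lia))); eauto; left; auto).
        assert (N6 = N) by (eapply bs_N; eauto). subst N6.
        assert (Hnff : nonfinal (For [] c p b)) by (intros [[? Hf]|[? [Hf _]]]; discriminate).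
        destruct (L_ctx _ (KScoped [] N L) _ _ _ _ _ _ _ _ Hnff HS5)
          as [n9 [r5 [G7 [L7 [N7 [Hn9 [HF HS6]]]]]]].
        simpl in HS6.
        destruct (L_scoped_final _ _ _ _ _ _ _ _ _ _ _ _ (ev_res _ _ _ _ _ _ _ _ _ HF) HS6)
          as [[-> [Hx _]]|[[-> [_ [-> [-> [-> ->]]]]]|[m [-> [Hm [-> [-> [-> ->]]]]]]]]; [congruence| |].
        -- assert (HbF : bs (For [] c p b) G6 L6 N regular G7 L7 N7)
             by (eapply (proj2 (IH n9 ltac:(lia))); eauto; left; auto).
           assert (N7 = N) by (eapply bs_N; eauto). subst N7.
           assert (Hres : restrict L7 L = L7).
           { apply restrict_sub; intros x Hx. apply (bs_for_dom _ _ _ _ _ _ _ _ HbF c p b eq_refl).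
             apply (bs_block_dom _ _ _ _ _ _ _ _ HbP). apply (bs_block_dom _ _ _ _ _ _ _ _ HbB). auto. }
           destruct Hbr as [[_ ->]|[[Hx _]|[Hx _]]]; try discriminate.
           rewrite Hres. eapply bs_for_loop; eauto.
        -- assert (HbF : bs (For [] c p b) G6 L6 N (Mode m) G7 L7 N7)
             by (eapply (proj2 (IH n9 ltac:(lia))); eauto; unfold stmt_res; intuition (subst; auto)).
           assert (N7 = N) by (eapply bs_N; eauto). subst N7.
           destruct (bs_props _ _ _ _ _ _ _ _ _ HbF HsF HN) as [_ Hbc].
           destruct (Hbc eq_refl) as [Hb1 Hb2].
           assert (Hres : restrict L7 L = L7).
           { apply restrict_sub; intros x Hx. apply (bs_for_dom _ _ _ _ _ _ _ _ HbF c p b eq_refl).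
             apply (bs_block_dom _ _ _ _ _ _ _ _ HbP). apply (bs_block_dom _ _ _ _ _ _ _ _ HbB). auto. }
           rewrite Hres.
           destruct Hbr as [[Hx _]|[[Hx _]|[Hx ->]]]; try discriminate;
             inversion Hx; subst; try contradiction.
           eapply bs_for_loop; eauto.
      * assert (HbP : bs (Block p) G4 L4 N (Mode m) G6 L6 N6)
          by (eapply (proj2 (IH n7 ltac:(lia))); eauto; unfold stmt_res; intuition (subst; auto)).
        assert (N6 = N) by (eapply bs_N; eauto). subst N6.
        destruct (bs_props _ _ _ _ _ _ _ _ _ HbP HsP HN) as [_ Hbc].
        destruct (Hbc eq_refl) as [Hb1 Hb2].
        assert (Hres : restrict L6 L = L6).
        { apply restrict_sub; intros x Hx.
          apply (bs_block_dom _ _ _ _ _ _ _ _ HbP). apply (bs_block_dom _ _ _ _ _ _ _ _ HbB). auto. }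
        rewrite Hres.
        destruct Hbr as [[Hx _]|[[Hx _]|[Hx ->]]]; try discriminate;
          inversion Hx; subst; try contradiction.
        eapply bs_for_halt2; eauto.
    +
      rewrite HresB.
      destruct Hcnt as [[_ Hx]|[[_ Hx]|[[-> Hx]|[-> Hx]]]]; try discriminate; inversion Hx; subst.
      * destruct Hbr as [[Hx' _]|[[_ ->]|[Hx' _]]]; try discriminate.
        eapply bs_for_halt1; eauto.
      * destruct Hbr as [[Hx' _]|[[Hx' _]|[_ ->]]]; try discriminate.
        eapply bs_for_halt1; eauto.
Qed.

Lemma MS_step n : (forall m, m < n -> ME m /\ MS m) -> ME n -> MS n.
Proof.
  intros IH HE lp S G L N r G' L' N' Hs HN Hr H.
  assert (IHE : forall m, m < n -> ME m) by (intros; apply IH; auto).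
  destruct Hs.
  -
    destruct (ev_block_inv _ _ _ _ _ _ _ _ _ H) as [[-> [-> [-> [-> ->]]]]|[Hne [Hdis [n' [Hn' HS]]]]].
    + pose proof (bs_block [] G L N regular G L ltac:(intro; right; reflexivity) (bs_seq_empty _ _ _)) as Hb.
      rewrite restrict_self in Hb. exact Hb.
    + destruct (ev_scoped ss lp H0 n' ltac:(intros; apply IH; lia) _ _ _ _ _ _ _ _ _
                (src_nspace_dunion _ _ _ HN H0) HS) as [L2 [Hseq [-> ->]]].
      apply bs_block; auto.
  -
    assert (Hnf : nonfinal (FunDef f ys zs b)) by (intros [[? Hf]|[? [Hf _]]]; discriminate).
    assert (Hnk : forall K h, FunDef f ys zs b <> plug1 K h) by (intros K h; destruct K; discriminate).
    destruct (L_noctx _ _ _ _ _ _ _ _ _ Hnf Hnk H) as [n' [t1 [G1 [L1 [N1 [_ [Hb Hc]]]]]]].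
    inversion Hb; subst. finv Hc. constructor.
  -
    destruct (L_hole_exp _ (KLet xs) _ _ _ _ _ _ _ _ I H0 HN IHE H)
      as [vs [G1 [n' [t1 [G2 [L2 [N2 [Hce [Hn' [Hbs Hc]]]]]]]]]].
    simpl in Hbs; inversion Hbs; subst. finv Hc. eapply bs_let; eauto.
  -
    destruct (L_hole_exp _ (KAssign xs) _ _ _ _ _ _ _ _ I H0 HN IHE H)
      as [vs [G1 [n' [t1 [G2 [L2 [N2 [Hce [Hn' [Hbs Hc]]]]]]]]]].
    simpl in Hbs; inversion Hbs; subst. finv Hc. eapply bs_assign; eauto.
  -
    destruct (HE _ _ _ _ _ _ _ _ H0 HN H) as [vs [-> Hbe]].
    assert (vs = []) as ->.
    { destruct Hr as [Hr|[Hr|[Hr|Hr]]]; inversion Hr; auto. }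
    assert (N' = N) by (eapply bs_exp_N; eauto). subst N'. apply bs_expstmt; auto.
  -
    destruct (L_hole_exp _ (KIf b) _ _ _ _ _ _ _ _ I H0 HN IHE H)
      as [vs [G1 [n' [t1 [G2 [L2 [N2 [Hce [Hn' [Hbs Hc]]]]]]]]]].
    simpl in Hbs; inversion Hbs; subst.
    + finv Hc. eapply bs_if_false; eauto.
    + assert (Hbb : bs (Block b) G2 L2 N2 r G' L' N') by (apply (proj2 (IH n' Hn') lp); [constructor; auto | auto | auto | exact Hc]).
      assert (N' = N2) by (eapply bs_N; eauto). subst N'. eapply bs_if_true; eauto.
  -
    destruct (L_hole_exp _ (KSwitch cs d) _ _ _ _ _ _ _ _ I H0 HN IHE H)
      as [vs [G1 [n' [t1 [G2 [L2 [N2 [Hce [Hn' [Hbs Hc]]]]]]]]]].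
    simpl in Hbs; inversion Hbs; subst.
    + assert (Hbb : bs (Block d) G2 L2 N2 r G' L' N') by (apply (proj2 (IH n' Hn') lp); [constructor; auto | auto | auto | exact Hc]).
      assert (N' = N2) by (eapply bs_N; eauto). subst N'. eapply bs_switch_default; eauto.
    + assert (Hbb : bs (Block sk) G2 L2 N2 r G' L' N')
        by (apply (proj2 (IH n' Hn') lp); [constructor; eapply Forall_case; eauto | auto | auto | exact Hc]).
      assert (N' = N2) by (eapply bs_N; eauto). subst N'. eapply bs_switch_case; eauto.
  -
    assert (Hnf : nonfinal (For i c p b)) by (intros [[? Hf]|[? [Hf _]]]; discriminate).
    assert (Hnk : forall K h, For i c p b <> plug1 K h) by (intros K h; destruct K; discriminate).
    destruct (L_noctx _ _ _ _ _ _ _ _ _ Hnf Hnk H) as [n' [t1 [G1 [L1 [N1 [Hn' [Hb Hc]]]]]]].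
    inversion Hb; subst.
    + assert (Hsb : src_stmt false (Block (i ++ [For [] c p b]))).
      { constructor. apply Forall_app; split; auto. constructor; [|constructor]. apply src_for; auto. }
      assert (Hbb : bs (Block (i ++ [For [] c p b])) G1 L1 N1 r G' L' N')
        by (apply (proj2 (IH n' Hn') false); [exact Hsb | auto | auto | exact Hc]).
      assert (N' = N1) by (eapply bs_N; eauto). subst N'. apply bs_for_init; auto.
    + assert (IH' : forall m, m < n' -> ME m /\ MS m) by (intros; apply IH; lia).
      apply (ev_loop n' IH'); auto.
  - finv H. constructor; auto.
  - finv H. constructor; auto.
  - finv H. constructor; auto.
Qed.

Lemma main_ev n : ME n /\ MS n.
Proof.
  induction n as [n IH] using lt_wf_ind.
  assert (HE : ME n) by (apply ME_step; auto).
  split; auto. apply MS_step; auto.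
Qed.

End Proof.

Theorem theorem1 (D : dialect) (S : @term D) (G : genv D) (L : @lstate D) (N : @nspace D) :
  src_stmt false S -> src_nspace N -> fin_dom L -> fin_dom N ->
  forall (G' : genv D) (L' : @lstate D) (N' : @nspace D),
    bs S G L N regular G' L' N' <-> steps (S, G, L, N) (regular, G', L', N').
Proof.
  intros Hs HN _ _ G' L' N'. split.
  - intro H. destruct (bs_to_steps_all _ _ _ _ _ _ _ _ H false Hs HN) as [Hst _]. exact Hst.
  - intro H. destruct (steps_ev _ _ H S G L N regular G' L' N' eq_refl eq_refl fin_reg) as [n Hn].
    apply (proj2 (main_ev n) false S G L N regular G' L' N' Hs HN); auto. left; auto.
Qed.
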